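(* Let $A=D(A)\oplus R(A)$ be an Abelian group, where $D(A)\neq 0$ is the divisible part and $R(A)\neq 0$ is the reduced part of $A$. Then $\mathrm{End}\,A$ is centrally essential if and only if $R(A)\cong\bigoplus_{p\in P'}Z_{p^{k_p}}$ (with positive integers $k_p$) and either $D(A)\cong Q$ or $D(A)\cong\bigoplus_{p\in P''}Z_{p^\infty}$, where $P'$ and $P''$ are sets of pairwise distinct primes with $P'\cap P''=\emptyset$.
   Context: All rings are associative with non-zero identity. A ring $R$ is centrally essential if for every non-zero $a\in R$ there exist non-zero elements $x,y$ of the center of $R$ with $ax=y$. $Q$ is the additive group of rationals, $Z_{p^k}$ the cyclic group of order $p^k$, $Z_{p^\infty}$ the quasi-cyclic $p$-group. Every Abelian group decomposes as the direct sum of its maximal divisible subgroup $D(A)$ and a reduced subgroup $R(A)$. *)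

(* Defs.v *)
From HB Require Import structures.
From mathcomp Require Import all_boot all_order all_algebra.
From mathcomp Require Import boolp classical_sets functions.
Set Implicit Arguments. Unset Strict Implicit. Unset Printing Implicit Defensive.
Import Order.TTheory GRing.Theory Num.Theory.
Local Open Scope ring_scope.

Definition is_subgroup (A : zmodType) (S : A -> Prop) : Prop :=
  S 0 /\ (forall x y, S x -> S y -> S (x - y)).

Definition nonzero_sub (A : zmodType) (S : A -> Prop) : Prop :=
  exists x, S x /\ x <> 0.

Definition divisible_sub (A : zmodType) (S : A -> Prop) : Prop :=
  is_subgroup S /\
  (forall x n, S x -> (0 < n)%N -> exists y, S y /\ y *+ n = x).

Definition is_divisible_part (A : zmodType) (S : A -> Prop) : Prop :=
  divisible_sub S /\ (forall T, divisible_sub T -> forall x, T x -> S x).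

Definition internal_dsum (A : zmodType) (S T : A -> Prop) : Prop :=
  is_subgroup S /\ is_subgroup T /\
  (forall x, S x -> T x -> x = 0) /\
  (forall a, exists s t, S s /\ T t /\ a = s + t).

Definition sub_isomorphic (A B : zmodType) (S : A -> Prop) (T : B -> Prop) : Prop :=
  exists f : A -> B,
    (forall x y, S x -> S y -> f (x + y) = f x + f y) /\
    (forall x, S x -> T (f x)) /\
    (forall x y, S x -> S y -> f x = f y -> x = y) /\
    (forall z, T z -> exists x, S x /\ f x = z).

(* Elements of End A are the additive maps A -> A (compared pointwise);     *)
(* the product is composition.                                               *)
Definition is_endo (A : zmodType) (f : A -> A) : Prop :=
  forall x y, f (x + y) = f x + f y.

Definition endo_nonzero (A : zmodType) (f : A -> A) : Prop := exists x, f x <> 0.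

Definition endo_central (A : zmodType) (f : A -> A) : Prop :=
  is_endo f /\ (forall g, is_endo g -> forall x, f (g x) = g (f x)).

Definition End_centrally_essential (A : zmodType) : Prop :=
  forall a : A -> A, is_endo a -> endo_nonzero a ->
    exists x y : A -> A,
      endo_central x /\ endo_central y /\ endo_nonzero x /\ endo_nonzero y /\
      (forall z, a (x z) = y z).

(* The group Q/Z, realised on the representatives in [0,1).                 *)
Definition frac (x : rat) : rat := x - (Num.floor x)%:~R.

Lemma frac_itv x : (0 <= frac x) && (frac x < 1).
Proof.
rewrite /frac subr_ge0 floor_le /= ltrBlDr addrC.
by rewrite -[1]/(1%:~R) -intrD floorD1_gt.
Qed.

Lemma fracDz x (z : int) : frac (x + z%:~R) = frac x.
Proof.
rewrite /frac floorDrz ?intr_int // intrKfloor intrD.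
by rewrite opprD addrACA subrr addr0.
Qed.

Lemma frac_id x : 0 <= x < 1 -> frac x = x.
Proof.
by move=> hx; rewrite /frac (@floor_def _ x 0) ?subr0 //.
Qed.

Lemma fracDl x y : frac (frac x + y) = frac (x + y).
Proof.
have -> : frac x + y = (x + y) + (- Num.floor x)%:~R by rewrite /frac intrN addrAC.
exact: fracDz.
Qed.

Record QZ := MkQZ { qzval : rat; _ : (0 <= qzval) && (qzval < 1) }.
HB.instance Definition _ := [isSub for qzval].
HB.instance Definition _ := [Choice of QZ by <:].

Definition qz_of (x : rat) : QZ := MkQZ (frac_itv x).
Definition qz0 : QZ := qz_of 0.
Definition qzopp (a : QZ) : QZ := qz_of (- qzval a).
Definition qzadd (a b : QZ) : QZ := qz_of (qzval a + qzval b).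

Lemma qzvalP (a : QZ) : 0 <= qzval a < 1.
Proof. by case: a. Qed.

Lemma qzaddA : associative qzadd.
Proof.
move=> a b c; apply: val_inj => /=.
rewrite fracDl [qzval a + _]addrC fracDl.
by rewrite [in LHS]addrC addrA.
Qed.

Lemma qzaddC : commutative qzadd.
Proof. by move=> a b; apply: val_inj => /=; rewrite addrC. Qed.

Lemma qzadd0 : left_id qz0 qzadd.
Proof. by move=> a; apply: val_inj => /=; rewrite fracDl add0r frac_id // qzvalP. Qed.

Lemma qzaddN : left_inverse qz0 qzopp qzadd.
Proof. by move=> a; apply: val_inj => /=; rewrite fracDl addNr. Qed.

HB.instance Definition _ := GRing.isZmodule.Build QZ qzaddA qzaddC qzadd0 qzaddN.

(* Z_{p^k}: the cyclic subgroup of Q/Z of order p^k, i.e. its p^k-torsion. *)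
Definition cyclic_QZ (n : nat) : QZ -> Prop := fun x => x *+ n = 0.

(* Z_{p^oo}: the p-primary component of Q/Z (quasi-cyclic p-group). *)
Definition prufer_QZ (p : nat) : QZ -> Prop := fun x => exists k, x *+ (p ^ k) = 0.

(* External direct sum  (+)_{p in P} H_p  of subgroups H_p of G, realised as
   the finitely supported functions f : nat -> G with f p in H_p for p in P
   and f p = 0 for p not in P. *)
Definition ext_dsum (G : zmodType) (P : set nat) (H : nat -> G -> Prop) :
  (nat -> G) -> Prop :=
  fun f => (forall p, ~ P p -> f p = 0) /\ (forall p, P p -> H p (f p)) /\
           (exists N, forall p, (N <= p)%N -> f p = 0).

Definition set_of_primes (P : set nat) : Prop := forall p, P p -> prime p.

(* Main.v *)
Require Import Defs.
From HB Require Import structures.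
From mathcomp Require Import all_boot all_order all_algebra.
From mathcomp Require Import boolp classical_sets functions.
From mathcomp Require Import ring.
Import Order.TTheory GRing.Theory Num.Theory.
Set Implicit Arguments. Unset Strict Implicit. Unset Printing Implicit Defensive.
Local Open Scope ring_scope.

Section Basics.
Variable A : zmodType.
Implicit Types (S T : A -> Prop) (f g : A -> A).

Definition addS S f := forall x y, S x -> S y -> f (x + y) = f x + f y.

Lemma sub0 S : is_subgroup S -> S 0.
Proof. by case. Qed.

Lemma subN S x : is_subgroup S -> S x -> S (- x).
Proof. by move=> [h0 hB] hx; rewrite -sub0r; apply: hB. Qed.

Lemma subD S x y : is_subgroup S -> S x -> S y -> S (x + y).
Proof. by move=> sS hx hy; rewrite -[y]opprK; apply: sS.2 => //; apply: subN. Qed.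

Lemma subB S x y : is_subgroup S -> S x -> S y -> S (x - y).
Proof. by move=> [_ hB]; apply: hB. Qed.

Lemma subMn S x n : is_subgroup S -> S x -> S (x *+ n).
Proof.
move=> sS hx; elim: n => [|n IH]; first by rewrite mulr0n; apply: sub0.
by rewrite mulrS; apply: subD.
Qed.

Lemma subMz S x (i : int) : is_subgroup S -> S x -> S (x *~ i).
Proof.
move=> sS hx; case: i => n; first by rewrite -pmulrn; apply: subMn.
by rewrite NegzE mulrNz -pmulrn; apply: subN => //; apply: subMn.
Qed.

Lemma addS0 S f : is_subgroup S -> addS S f -> f 0 = 0.
Proof.
move=> sS af; have h := af 0 0 (sub0 sS) (sub0 sS); rewrite addr0 in h.
by rewrite -[LHS](addrK (f 0)) -h subrr.
Qed.

Lemma addSN S f x : is_subgroup S -> addS S f -> S x -> f (- x) = - f x.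
Proof.
move=> sS af hx; have := af x (- x) hx (subN sS hx); rewrite subrr (addS0 sS af).
by move/eqP; rewrite eq_sym addrC addr_eq0 => /eqP.
Qed.

Lemma addSB S f x y : is_subgroup S -> addS S f -> S x -> S y -> f (x - y) = f x - f y.
Proof. by move=> sS af hx hy; rewrite af ?(addSN sS af) //; apply: subN. Qed.

Lemma addSMn S f x n : is_subgroup S -> addS S f -> S x -> f (x *+ n) = f x *+ n.
Proof.
move=> sS af hx; elim: n => [|n IH]; first by rewrite !mulr0n (addS0 sS af).
by rewrite !mulrS af ?IH //; apply: subMn.
Qed.

Lemma addSMz S f x (i : int) : is_subgroup S -> addS S f -> S x -> f (x *~ i) = f x *~ i.
Proof.
move=> sS af hx; case: i => n; first by rewrite -!pmulrn (addSMn _ sS af).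
rewrite NegzE !mulrNz -!pmulrn (addSN sS af) ?(addSMn _ sS af) //; exact: subMn.
Qed.

Lemma subT : is_subgroup (fun _ : A => True).
Proof. by []. Qed.

Lemma endo_addS f S : is_endo f -> addS S f.
Proof. by move=> ef x y _ _; apply: ef. Qed.

Lemma endo0 f : is_endo f -> f 0 = 0.
Proof. by move=> ef; apply: (@addS0 (fun _ => True)) => //; apply: endo_addS. Qed.
Lemma endoN f x : is_endo f -> f (- x) = - f x.
Proof. by move=> ef; apply: (@addSN (fun _ => True)) => //; apply: endo_addS. Qed.
Lemma endoB f x y : is_endo f -> f (x - y) = f x - f y.
Proof. by move=> ef; apply: (@addSB (fun _ => True)) => //; apply: endo_addS. Qed.
Lemma endoMn f x n : is_endo f -> f (x *+ n) = f x *+ n.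
Proof. by move=> ef; apply: (@addSMn (fun _ => True)) => //; apply: endo_addS. Qed.
Lemma endoMz f x i : is_endo f -> f (x *~ i) = f x *~ i.
Proof. by move=> ef; apply: (@addSMz (fun _ => True)) => //; apply: endo_addS. Qed.

Lemma addr_swap (a b c d : A) : c - a = b - d -> a + b = c + d.
Proof. by move=> h; rewrite -[c](subrK a) h addrAC subrK addrC. Qed.

Definition good S0 (phi0 : A -> A) T (u : (A -> Prop) * (A -> A)) :=
  [/\ is_subgroup u.1, addS u.1 u.2, (forall x, u.1 x -> T (u.2 x)) &
      (forall x, S0 x -> u.1 x /\ u.2 x = phi0 x)].

Lemma extension S0 phi0 T :
  is_subgroup S0 -> addS S0 phi0 -> (forall x, S0 x -> T (phi0 x)) -> is_subgroup T ->
  (forall u, good S0 phi0 T u -> forall x, exists y, T y /\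
      forall i : int, u.1 (x *~ i) -> u.2 (x *~ i) = y *~ i) ->
  exists f, is_endo f /\ (forall x, T (f x)) /\ (forall x, S0 x -> f x = phi0 x).
Proof.
move=> sS0 aS0 TS0 sT step.
pose G := {u | good S0 phi0 T u}.
have g0 : good S0 phi0 T (S0, phi0) by split.
pose t0 : G := exist _ _ g0.
pose R (u v : G) := `[< forall x, (sval u).1 x -> (sval v).1 x /\ (sval v).2 x = (sval u).2 x >].
have [| | |t tmax] := @ZL_preorder G t0 R.
- by move=> u; apply/asboolP => x ux; split.
- move=> u v w /asboolP uv /asboolP vw; apply/asboolP => x /uv [vx <-]; exact: vw.
- move=> F Ftot.
  have [[u0 Fu0]|F0] := pselect (exists u, F u); last first.
    by exists t0 => s Fs; exfalso; apply: F0; exists s.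
  have big u v x y : F u -> F v -> (sval u).1 x -> (sval v).1 y ->
      exists w, [/\ F w, (sval w).1 x & (sval w).1 y].
    move=> Fu Fv ux vy; have [/asboolP uv|/asboolP vu] := Ftot _ _ Fu Fv.
      by exists v; split => //; exact: (uv x ux).1.
    by exists u; split => //; exact: (vu y vy).1.
  pose US x := exists u, F u /\ (sval u).1 x.
  pose Uphi x := match pselect (US x) with
                 | left h => (sval (sval (cid h))).2 x | right _ => 0 end.
  have agree u x : F u -> (sval u).1 x -> Uphi x = (sval u).2 x.
    move=> Fu ux; rewrite /Uphi; case: pselect => [h|nh]; last first.
      by exfalso; apply: nh; exists u.
    have [Fv vx] := svalP (cid h); move: (sval (cid h)) Fv vx => v Fv vx.
    have [/asboolP uv|/asboolP vu] := Ftot _ _ Fu Fv.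
      exact: (uv x ux).2.
    by rewrite (vu x vx).2.
  have gU : good S0 phi0 T (US, Uphi).
    split => /=.
    - split.
        by exists u0; split => //; case: (svalP u0) => sg _ _ _; apply: sub0.
      move=> x y [u [Fu ux]] [v [Fv vy]].
      have [w [Fw wx wy]] := big _ _ _ _ Fu Fv ux vy.
      exists w; split => //; case: (svalP w) => sg _ _ _; exact: subB.
    - move=> x y [u [Fu ux]] [v [Fv vy]].
      have [w [Fw wx wy]] := big _ _ _ _ Fu Fv ux vy.
      case: (svalP w) => sg ag _ _.
      by rewrite !(agree w) // ?ag //; apply: subD.
    - move=> x [u [Fu ux]]; rewrite (agree u) //; case: (svalP u) => _ _ hT _; exact: hT.
    - move=> x hx; case: (svalP u0) => _ _ _ h0; have [ux ex] := h0 x hx.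
      by split; [exists u0 | rewrite (agree u0)].
  exists (exist _ _ gU) => s Fs; apply/asboolP => x sx /=; split.
    by exists s.
  by rewrite (agree s).
have St : forall x, (sval t).1 x.
  move=> x; case: (pselect ((sval t).1 x)) => // nx; exfalso.
  case Et: (sval t) nx => [St ph] /= nx.
  have := svalP t; rewrite Et => -[sg ag hT h0]; simpl in sg, ag, hT, h0.
  have [y [Ty hy]] := step _ (svalP t) x; rewrite Et /= in hy.
  pose S' z := exists s j, St s /\ z = s + x *~ j.
  have wd s j s' j' : St s -> St s' -> s + x *~ j = s' + x *~ j' ->
      ph s + y *~ j = ph s' + y *~ j'.
    move=> hs hs' e.
    have e2 : x *~ (j - j') = s' - s.
      by rewrite mulrzBr -[x *~ j](addKr s) e addrA addrK addrC.
    have hs2 : St (x *~ (j - j')) by rewrite e2; apply: subB.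
    have := hy _ hs2; rewrite e2 (addSB sg ag) // mulrzBr => e3.
    by apply: addr_swap.
  pose ph' z := match pselect (S' z) with
    | left h => ph (sval (cid h)) + y *~ (sval (cid (svalP (cid h))))
    | right _ => 0 end.
  have ph'E s j : St s -> ph' (s + x *~ j) = ph s + y *~ j.
    move=> hs; rewrite /ph'; case: pselect => [h|nh]; last first.
      by exfalso; apply: nh; exists s, j.
    have [hs2 e] := svalP (cid (svalP (cid h))).
    exact: (wd _ _ _ _ hs2 hs (esym e)).
  have S'x : S' x by exists 0, 1; rewrite add0r; split => //; apply: sub0.
  have g' : good S0 phi0 T (S', ph').
    split => /=.
    - split; first by exists 0, 0; rewrite mulr0z addr0; split => //; apply: sub0.
      move=> _ _ [s [j [hs ->]]] [s' [j' [hs' ->]]]; exists (s - s'), (j - j').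
      split; first exact: subB.
      by rewrite mulrzBr opprD addrACA.
    - move=> _ _ [s [j [hs ->]]] [s' [j' [hs' ->]]].
      have hss : St (s + s') by apply: subD.
      by rewrite addrACA -mulrzDr !ph'E // ag // mulrzDr addrACA.
    - move=> _ [s [j [hs ->]]]; rewrite ph'E //; apply: subD => //; first exact: hT.
      exact: subMz.
    - move=> z hz; have [hz1 hz2] := h0 z hz; split.
        by exists z, 0; rewrite mulr0z addr0.
      by have := ph'E z 0 hz1; rewrite mulr0z !addr0 => ->.
  pose t' : G := exist _ _ g'.
  have Rtt' : R t t'.
    apply/asboolP => z; rewrite Et /= => hz; split; first by exists z, 0; rewrite mulr0z addr0.
    by have := ph'E z 0 hz; rewrite mulr0z !addr0.
  have /asboolP := tmax t' Rtt'.
  by move=> /(_ x S'x); rewrite Et /= => -[].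
exists (sval t).2; case: (svalP t) => sg ag hT h0; split.
  by move=> a b; apply: ag; apply: St.
split; first by move=> a; apply: hT; apply: St.
by move=> a ha; exact: (h0 a ha).2.
Qed.

End Basics.

Section NT.
Variable A : zmodType.
Implicit Types (S T : A -> Prop) (f g : A -> A).

Lemma kill_int (x : A) (a b : int) : x *~ a = 0 -> x *~ b = 0 -> x *~ gcdz a b = 0.
Proof.
move=> ha hb; have [u [v <-]] := Bezoutz a b.
by rewrite mulrzDr (mulrC u) (mulrC v) !mulrzA ha hb !mul0rz addr0.
Qed.

Lemma coprime_kill (x : A) a b : x *+ a = 0 -> x *+ b = 0 -> coprime a b -> x = 0.
Proof.
rewrite !pmulrn => ha hb cab; have := kill_int ha hb.
by rewrite /gcdz /= (eqP cab) mulr1z.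
Qed.

Lemma order_pp p m (x : A) (i : int) : prime p -> x *+ p ^ m = 0 ->
  x *+ p ^ m.-1 <> 0 -> x *~ i = 0 -> (p ^ m %| `|i|)%N.
Proof.
move=> pp hm hm1 hi.
have hg := kill_int hi (etrans (esym (pmulrn _ _)) hm).
have : (gcdn `|i| (p ^ m) %| p ^ m)%N by apply: dvdn_gcdr.
case/(dvdn_pfactor _ _ pp) => e le_em ge.
have ge' : gcdz i (p ^ m)%:Z = (p ^ e)%:Z by rewrite /gcdz /= ge.
rewrite ge' -pmulrn in hg.
have [em|] := eqVneq e m.
  by rewrite -em -ge dvdn_gcdl.
move=> nem.
have le : (e <= m.-1)%N.
  clear -le_em nem; case: m le_em nem => [|m']; first by rewrite leqn0 => /eqP ->; rewrite eqxx.
  by move=> le ne; rewrite -ltnS ltn_neqAle ne le.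
exfalso; apply: hm1.
by rewrite -(subnKC le) expnD mulrnA hg mul0rn.
Qed.

Definition cyc (x : A) : A -> Prop := fun z => exists i : int, z = x *~ i.

Lemma cyc_sub x : is_subgroup (cyc x).
Proof.
split; first by exists 0; rewrite mulr0z.
by move=> _ _ [i ->] [j ->]; exists (i - j); rewrite mulrzBr.
Qed.

Lemma cyc_hom x y : (forall i, x *~ i = 0 -> y *~ i = 0) ->
  exists phi, addS (cyc x) phi /\ (forall i, phi (x *~ i) = y *~ i).
Proof.
move=> ann.
pose phi z := match pselect (cyc x z) with left h => y *~ sval (cid h) | right _ => 0 end.
have phiE i : phi (x *~ i) = y *~ i.
  rewrite /phi; case: pselect => [h|nh]; last by exfalso; apply: nh; exists i.
  have e := svalP (cid h); move: (sval (cid h)) e => j e.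
  apply/eqP; rewrite -subr_eq0 -mulrzBr; apply/eqP; apply: ann.
  by rewrite mulrzBr -e subrr.
exists phi; split => //.
by move=> _ _ [i ->] [j ->]; rewrite -mulrzDr !phiE mulrzDr.
Qed.

Lemma step_gen S phi x0 : is_subgroup S -> addS S phi ->
  (forall i, S (x0 *~ i) -> i = 0) \/
  (exists k, [/\ (0 < k)%N, S (x0 *+ k), (forall n, S (x0 *+ n) -> (k %| n)%N) &
     forall y0, y0 *+ k = phi (x0 *+ k) -> forall i, S (x0 *~ i) -> phi (x0 *~ i) = y0 *~ i]).
Proof.
move=> sS aS.
case: (pselect (exists k, (0 < k)%N /\ S (x0 *+ k))) => [hex|nex]; last first.
  left => i hi; apply/eqP; apply: contraT => i0; exfalso; apply: nex.
  exists `|i|%N; split; first by rewrite absz_gt0.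
  case: i i0 hi => n _ hi /=; first by rewrite pmulrn.
  rewrite NegzE mulrNz in hi; rewrite -[_ *+ _]opprK pmulrn; exact: subN.
pose P k := `[< (0 < k)%N /\ S (x0 *+ k) >].
have hP : exists k, P k by case: hex => k hk; exists k; apply/asboolP.
case: (ex_minnP hP) => k /asboolP [k0 Sk] kmin.
have divi i : S (x0 *~ i) -> (k%:Z %| i)%Z.
  move=> hi; apply/dvdz_mod0P.
  have knz : k%:Z != 0 by rewrite eqz_nat -lt0n.
  have r0 := modz_ge0 i knz.
  have kpos : (0 < k%:Z)%R by rewrite ltz_nat.
  have rlt := ltz_pmod i kpos.
  move: (i %% k)%Z r0 rlt (divz_eq i k) => r r0 rlt ei.
  have Sr : S (x0 *~ r).
    have e1 : x0 *~ i = (x0 *+ k) *~ (i %/ k)%Z + x0 *~ r.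
      by rewrite {1}ei mulrzDr pmulrn -mulrzA (mulrC k%:Z).
    have -> : x0 *~ r = x0 *~ i - (x0 *+ k) *~ (i %/ k)%Z by rewrite e1 addrC addKr.
    by apply: subB => //; apply: subMz.
  case: r r0 rlt ei Sr => // n _ rlt ei Sr; case: n rlt ei Sr => // n rlt ei Sr.
  have := kmin n.+1; rewrite -pmulrn in Sr.
  have -> : P n.+1 by apply/asboolP.
  by move=> /(_ isT); rewrite leqNgt -ltz_nat rlt.
right; exists k; split => //.
  by move=> n hn; have := divi n; rewrite -pmulrn dvdzE /=; apply.
move=> y0 hy i hi; have /dvdzP [q ->] := divi i hi.
by rewrite mulrC !mulrzA -!pmulrn (addSMz _ sS aS) // hy.
Qed.

End NT.

Section Ext.
Variable A : zmodType.
Implicit Types (S T : A -> Prop) (f g : A -> A).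

Lemma div_ext T S0 phi0 : divisible_sub T -> is_subgroup S0 -> addS S0 phi0 ->
  (forall z, S0 z -> T (phi0 z)) ->
  exists f, is_endo f /\ (forall z, T (f z)) /\ (forall z, S0 z -> f z = phi0 z).
Proof.
move=> [sT dT] sS aS TS; apply: extension => // u [su au Tu _] x.
case: (step_gen x su au) => [h0|[k [k0 Sk _ hk]]].
  exists 0; split; first exact: sub0.
  by move=> i hi; have -> := h0 i hi; rewrite mulr0z mul0rz (addS0 su au).
have [y0 [Ty e]] := dT _ k (Tu _ Sk) k0.
by exists y0; split => //; apply: hk.
Qed.

Lemma div_map T x y : divisible_sub T -> T y -> (forall i, x *~ i = 0 -> y *~ i = 0) ->
  exists f, is_endo f /\ (forall z, T (f z)) /\ f x = y.
Proof.
move=> dT Ty ann; have [phi [aphi phiE]] := cyc_hom ann.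
have TS : forall z, cyc x z -> T (phi z).
  by move=> _ [i ->]; rewrite phiE; apply: subMz => //; case: dT.
have [f [ef [Tf hf]]] := div_ext dT (cyc_sub x) aphi TS.
exists f; split => //; split => //; rewrite hf; last by exists 1; rewrite mulr1z.
by have := phiE 1; rewrite !mulr1z.
Qed.

Lemma dsum_proj D R : internal_dsum D R ->
  exists pi : A -> A, [/\ is_endo pi, (forall a, D (pi a)), (forall a, R (a - pi a)),
     (forall d, D d -> pi d = d) & (forall r, R r -> pi r = 0)].
Proof.
move=> [sD [sR [DR dec]]].
have uniq s t s' t' : D s -> R t -> D s' -> R t' -> s + t = s' + t' -> s = s'.
  move=> hs ht hs' ht' e; apply/eqP; rewrite -subr_eq0; apply/eqP; apply: DR.
    exact: subB.
  have -> : s - s' = t' - t by apply/eqP; rewrite subr_eq addrAC eq_sym subr_eq addrC e.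
  exact: subB.
pose pi a := sval (cid (dec a)).
have piE a s t : D s -> R t -> a = s + t -> pi a = s.
  move=> hs ht ->; rewrite /pi; have [t' [hs' [ht' e]]] := svalP (cid (dec (s + t))).
  by apply: (uniq _ _ _ _ hs' ht' hs ht); rewrite -e.
have piP a : D (pi a) /\ R (a - pi a).
  rewrite /pi; have [t' [hs' [ht' e]]] := svalP (cid (dec a)).
  by split => //; rewrite [X in X - _]e addrAC subrr add0r.
exists pi; split.
- move=> a b; have [ha ra] := piP a; have [hb rb] := piP b.
  apply: (piE _ _ (a - pi a + (b - pi b))); [exact: subD|exact: subD|].
  by rewrite addrACA !subrKC.
- by move=> a; case: (piP a).
- by move=> a; case: (piP a).
- by move=> d hd; apply: (piE _ _ 0) => //; [exact: sub0 | rewrite addr0].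
- by move=> r hr; apply: (piE _ _ r) => //; [exact: sub0 | rewrite add0r].
Qed.

Lemma idem_lemma : End_centrally_essential A -> forall e, is_endo e ->
  (forall z, e (e z) = e z) -> forall f, is_endo f -> forall z, e (f (z - e z)) = 0.
Proof.
move=> CE e ee eid f ef z; apply/eqP; apply: contraT => /eqP nz.
pose a w := e (f (w - e w)).
have ea : is_endo a by move=> u v; rewrite /a ee opprD addrACA -ee -ef.
have [x [y [[ex cx] [[ey cy] [_ [[w yw] hxy]]]]]] := CE a ea (ex_intro _ z nz).
exfalso; apply: yw.
have h1 : y w = e (y w) by rewrite -hxy /a eid.
have h2 : y (e w) = 0.
  by rewrite -hxy /a (cx e ee) eid subrr (endo0 ef) (endo0 ee).
by rewrite h1 -(cy e ee) h2.
Qed.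

Lemma idem_lemma2 : End_centrally_essential A -> forall e, is_endo e ->
  (forall z, e (e z) = e z) -> forall f, is_endo f -> forall z, f (e z) = e (f (e z)).
Proof.
move=> CE e ee eid f ef z.
pose e' w := w - e w.
have ee' : is_endo e' by move=> u v; rewrite /e' ee opprD addrACA.
have eid' w : e' (e' w) = e' w by rewrite /e' (endoB _ _ ee) eid subrr subr0.
have := idem_lemma CE ee' eid' ef z; rewrite /e' subKr.
by move/eqP; rewrite subr_eq0 => /eqP.
Qed.

End Ext.

Section Tors.
Variable A : zmodType.
Implicit Types (S T : A -> Prop) (f g : A -> A).

Lemma mulrz_abs0 (x : A) (i : int) : (x *~ i = 0) <-> (x *+ `|i|%N = 0).
Proof.
case: i => n /=; first by rewrite -pmulrn.
rewrite NegzE mulrNz -pmulrn; split; last by move=> ->; rewrite oppr0.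
by move/eqP; rewrite oppr_eq0 => /eqP.
Qed.

Lemma kill_dvd (x : A) n (i : int) : x *+ n = 0 -> (n %| `|i|)%N -> x *~ i = 0.
Proof.
move=> hn /dvdnP [q hq]; apply/mulrz_abs0; rewrite hq mulnC mulrnA hn mul0rn //.
Qed.

Lemma coprime_div (x : A) p s k : x *+ p ^ s = 0 -> coprime p k ->
  exists u : int, (x *~ u) *+ k = x.
Proof.
move=> hx cpk; have cpk' : coprime (p ^ s) k by rewrite coprimeXl.
have [u [v e]] := Bezoutz k%:Z (p ^ s)%:Z.
have g1 : gcdz k%:Z (p ^ s)%:Z = 1.
  by rewrite /gcdz /=; rewrite coprime_sym in cpk'; rewrite (eqP cpk').
exists u; rewrite pmulrn mulrzA_C -[RHS]mulr1z -g1 -e mulrzDr (mulrC v).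
by rewrite (mulrzA x (p ^ s)%:Z v) -(pmulrn x) hx mul0rz addr0 (mulrC u).
Qed.

Lemma last_nonzero (x : A) p s : x <> 0 -> x *+ p ^ s = 0 ->
  exists t, x *+ p ^ t <> 0 /\ (x *+ p ^ t) *+ p = 0.
Proof.
elim: s => [|s IH] nx hx; first by exfalso; apply: nx; rewrite expn0 mulr1n in hx.
case: (pselect (x *+ p ^ s = 0)) => [h|h]; first exact: IH.
by exists s; split => //; rewrite -mulrnA -expnSr.
Qed.

Fixpoint prs (s : nat -> nat) n t := match t with 0 => 1%N | t'.+1 => (s (n + t')%N * prs s n t')%N end.

Lemma chain_down (s : nat -> nat) (c : nat -> A) : (forall n, c n.+1 *+ s n = c n) ->
  forall n t, c n = c (n + t)%N *+ prs s n t.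
Proof.
move=> hc n; elim => [|t IH]; first by rewrite addn0 mulr1n.
by rewrite /= mulrnA addnS hc -IH.
Qed.

Definition chainset (c : nat -> A) : A -> Prop := fun z => exists n (j : int), z = c n *~ j.

Lemma chain_sub (s : nat -> nat) (c : nat -> A) : (forall n, c n.+1 *+ s n = c n) ->
  is_subgroup (chainset c).
Proof.
move=> hc; split; first by exists 0%N, 0; rewrite mulr0z.
move=> _ _ [n [j ->]] [n' [j' ->]].
rewrite (chain_down hc n n') (chain_down hc n' n) (addnC n' n).
by exists (n + n')%N, ((prs s n n')%:Z * j - (prs s n' n)%:Z * j'); rewrite mulrzBr !mulrzA -!pmulrn.
Qed.

Lemma mk_chain T (x : A) (s : nat -> nat) : divisible_sub T -> (forall n, (0 < s n)%N) -> T x ->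
  exists c : nat -> A, [/\ c 0%N = x, (forall n, T (c n)) & (forall n, c n.+1 *+ s n = c n)].
Proof.
move=> [sT dT] spos Tx.
pose h y n := match pselect (exists z, T z /\ z *+ s n = y) with
  | left hh => sval (cid hh) | right _ => 0 end.
have hP y n : T y -> T (h y n) /\ h y n *+ s n = y.
  move=> Ty; rewrite /h; case: pselect => [hh|nh]; first exact: svalP (cid hh).
  by exfalso; apply: nh; apply: dT.
pose fix c n := match n with 0 => x | n'.+1 => h (c n') n' end.
have cT n : T (c n) by elim: n => [|n IH] //=; case: (hP _ n IH).
exists c; split => // n /=; by case: (hP _ n (cT n)).
Qed.

End Tors.

Section Pure.
Variable A : zmodType.
Implicit Types (S T : A -> Prop) (f g : A -> A).

Lemma addr_swap2 (a b c d : A) : a + b = c + d -> c - a = b - d.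
Proof. by move=> h; apply/eqP; rewrite subr_eq addrAC [b + a]addrC h addrK. Qed.

Lemma cyc_pure_proj p m (b : A) : prime p -> b *+ p ^ m = 0 -> b *+ p ^ m.-1 <> 0 ->
  (forall j z, b *~ j = z *+ p ^ m -> b *~ j = 0) ->
  exists e, [/\ is_endo e, (forall z, cyc b (e z)) & e b = b].
Proof.
move=> pp hm hm1 pure.
pose S0 z := exists (j : int) w, z = b *~ j + w *+ p ^ m.
pose phi0 z := match pselect (S0 z) with left h => b *~ sval (cid h) | right _ => 0 end.
have phi0E j w : phi0 (b *~ j + w *+ p ^ m) = b *~ j.
  rewrite /phi0; case: pselect => [h|nh]; last by exfalso; apply: nh; exists j, w.
  have [w' e] := svalP (cid h); move: (sval (cid h)) e => j' e.
  have e2 : b *~ (j' - j) = (w - w') *+ p ^ m.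
    by rewrite mulrzBr mulrnBl; apply: addr_swap2.
  by have := pure _ _ e2; rewrite mulrzBr => /eqP; rewrite subr_eq0 => /eqP.
have sS0 : is_subgroup S0.
  split; first by exists 0, 0; rewrite mulr0z mul0rn addr0.
  move=> _ _ [j [w ->]] [j' [w' ->]]; exists (j - j'), (w - w').
  by rewrite mulrzBr mulrnBl opprD addrACA.
have aS0 : addS S0 phi0.
  move=> _ _ [j [w ->]] [j' [w' ->]].
  by rewrite addrACA -mulrzDr -mulrnDl !phi0E mulrzDr.
have TS0 : forall z, S0 z -> cyc b (phi0 z).
  by move=> _ [j [w ->]]; rewrite phi0E; exists j.
have [e [ee [Te he]]] : exists f, is_endo f /\ (forall z, cyc b (f z)) /\
     (forall z, S0 z -> f z = phi0 z).
  apply: extension => //; first exact: cyc_sub.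
  move=> u [su au Tu h0] x0.
  case: (step_gen x0 su au) => [hz|[k [k0 Sk kdiv hk]]].
    exists 0; split; first by exists 0; rewrite mulr0z.
    by move=> i hi; have -> := hz i hi; rewrite mulr0z mul0rz (addS0 su au).
  have Sm : S0 (x0 *+ p ^ m) by exists 0, x0; rewrite mulr0z add0r.
  have [Sm1 Sm2] := h0 _ Sm.
  have := phi0E 0 x0; rewrite mulr0z add0r -Sm2 => um0.
  have /(dvdn_pfactor _ _ pp) [i le_im ki] := kdiv _ Sm1.
  have [c hc] := Tu _ Sk.
  have e1 : b *~ (c * (p ^ (m - i))%:Z) = 0.
    rewrite mulrzA -hc -pmulrn -(addSMn _ su au) // -mulrnA ki -expnD subnKC //.
  have := order_pp pp hm hm1 e1.
  rewrite abszM /= -{1}(subnKC le_im) expnD dvdn_pmul2r ?expn_gt0 ?prime_gt0 //.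
  rewrite -(absz_nat (p ^ i)) -dvdzE => /dvdzP [q hq].
  exists (b *~ q); split; first by exists q.
  apply: hk; rewrite hc hq ki pmulrn -mulrzA.
  by congr (_ *~ _); rewrite mulrC.
exists e; split => //.
by rewrite he; [have := phi0E 1 0; rewrite mulr1z mul0rn addr0 | exists 1, 0; rewrite mulr1z mul0rn addr0].
Qed.

Lemma proj_absorbs p m (b : A) e : End_centrally_essential A -> prime p -> (0 < m)%N ->
  b *+ p ^ m = 0 -> b *+ p ^ m.-1 <> 0 ->
  is_endo e -> (forall z, cyc b (e z)) -> e b = b ->
  forall z s, z *+ p ^ s = 0 -> cyc b z.
Proof.
move=> CE pp m0 hm hm1 ee Te eb.
have eid z : e (e z) = e z by have [j ->] := Te z; rewrite (endoMz _ _ ee) eb.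
move=> z s hz.
case: (pselect (z - e z = 0)) => [h|h].
  by have [j hj] := Te z; exists j; rewrite -hj; apply/eqP; rewrite -subr_eq0; apply/eqP.
have [j hj] := Te z.
have hz' : (z - e z) *+ p ^ (s + m) = 0.
  rewrite mulrnBl expnD !mulrnA hz mul0rn hj -mulrnA mulnC mulrnA.
  have bj : (b *~ j) *+ p ^ m = 0 by rewrite pmulrn mulrzAC -pmulrn hm mul0rz.
  by rewrite bj mul0rn subr0.
have [t [wn wp]] := last_nonzero h hz'.
set w := (z - e z) *+ p ^ t in wn wp.
have ew : e w = 0 by rewrite /w (endoMn _ _ ee) (endoB _ _ ee) eid subrr mul0rn.
have ann : forall i, b *~ i = 0 -> w *~ i = 0.
  move=> i hi; apply: (kill_dvd (n := p)); first by [].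
  have := order_pp pp hm hm1 hi; apply: dvdn_trans.
  exact: dvdn_exp.
have [g [ag gE]] := cyc_hom ann.
pose f x := g (e x).
have ef : is_endo f.
  by move=> x y; rewrite /f ee; apply: ag; apply: Te.
have := idem_lemma2 CE ee eid ef b.
rewrite /f !eb -[b]mulr1z gE mulr1z ew.
by move=> wz; exfalso; apply: wn.
Qed.

End Pure.

Section Hull.
Variable A : zmodType.
Implicit Types (S T : A -> Prop) (f g : A -> A).

Lemma proj_onto T : divisible_sub T ->
  exists e, [/\ is_endo e, (forall a, T (e a)) & forall t, T t -> e t = t].
Proof.
move=> dT; have [e [ee [Te he]]] := div_ext (S0 := T) (phi0 := id) dT dT.1 (fun _ _ _ _ => erefl) (fun _ h => h).
by exists e; split.
Qed.

Lemma hull_core D T e x w : End_centrally_essential A -> divisible_sub D ->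
  is_endo e -> (forall a, T (e a)) -> (forall t, T t -> e t = t) -> T x ->
  D w -> e w = 0 -> (forall i, x *~ i = 0 -> w *~ i = 0) -> w = 0.
Proof.
move=> CE dD ee Te he Tx Dw ew ann.
have eid a : e (e a) = e a by apply: he.
have [f [ef [Df fx]]] := div_map dD Dw ann.
have := idem_lemma2 CE ee eid ef x.
by rewrite (he _ Tx) fx ew.
Qed.

Lemma chain_div (c : nat -> A) :
  (forall n k, (0 < k)%N -> exists N (q : int), c n = c N *~ (q * k%:Z)) ->
  forall n (j : int) k, (0 < k)%N -> exists z, chainset c z /\ z *+ k = c n *~ j.
Proof.
move=> h n j k k0; have [N [q ->]] := h n k k0.
exists (c N *~ (q * j)); split; first by exists N, (q * j).
by rewrite pmulrn -!mulrzA; congr (_ *~ _); rewrite mulrAC.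
Qed.

Lemma chain_divisible (s : nat -> nat) (c : nat -> A) : (forall n, c n.+1 *+ s n = c n) ->
  (forall n k, (0 < k)%N -> exists N (q : int), c n = c N *~ (q * k%:Z)) ->
  divisible_sub (chainset c).
Proof.
move=> hc h; split; first exact: (chain_sub hc).
move=> _ k [n [j ->]] k0; exact: chain_div.
Qed.

Lemma prs_const p n t : prs (fun _ => p) n t = (p ^ t)%N.
Proof. by elim: t => [|t IH] //=; rewrite IH expnS. Qed.

Lemma prs_pos (s : nat -> nat) n t : (forall i, (0 < s i)%N) -> (0 < prs s n t)%N.
Proof. by move=> hs; elim: t => [|t IH] //=; rewrite muln_gt0 hs IH. Qed.

Lemma Qchain D x : divisible_sub D -> D x ->
  exists c : nat -> A, [/\ c 0%N = x, (forall n, D (c n)),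
    (forall n, exists P, (0 < P)%N /\ c n *+ P = x),
    (forall z, chainset c z -> D z) & divisible_sub (chainset c)].
Proof.
move=> dD Dx.
pose s n := (n.+1)`!.
have spos n : (0 < s n)%N by rewrite /s fact_gt0.
have [c [c0 Dc hc]] := mk_chain dD spos Dx.
exists c; split => //.
- move=> n; exists (prs s 0 n); split; first exact: prs_pos.
  by rewrite -c0 (chain_down hc 0 n).
- move=> _ [n [j ->]]; apply: subMz => //; exact: dD.1.
apply: (chain_divisible hc) => n k k0.
case: k k0 => // k' _.
have : (k'.+1 %| prs s n k'.+1)%N.
  rewrite /= dvdn_mulr // /s; apply: dvdn_fact.
  by rewrite /= ltnS leq_addl.
case/dvdnP => q hq.
exists (n + k'.+1)%N, q%:Z; rewrite (chain_down hc n k'.+1) hq.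
by rewrite pmulrn PoszM.
Qed.

Lemma Pchain D p d0 : prime p -> divisible_sub D -> D d0 -> d0 *+ p = 0 ->
  exists c : nat -> A, [/\ c 0%N = d0, (forall n, D (c n)),
    (forall n, c n.+1 *+ p = c n), (forall n, c n *+ p ^ n = d0) &
    divisible_sub (chainset c)].
Proof.
move=> pp dD Dd0 hd0.
have spos n : (0 < (fun _ : nat => p) n)%N by rewrite prime_gt0.
have [c [c0 Dc hc]] := mk_chain dD spos Dd0.
have cpow n : c n *+ p ^ n = d0.
  by rewrite -c0 (chain_down hc 0 n) prs_const.
exists c; split => //.
apply: (chain_divisible hc) => n k k0.
have [k' cpk hk] := pfactor_coprime pp k0.
set l := logn p k in hk.
have ckill : c (n + l)%N *+ p ^ (n + l).+1 = 0.
  by rewrite expnSr mulrnA cpow.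
have [u hu] := coprime_div ckill cpk.
exists (n + l)%N, u; rewrite (chain_down hc n l) prs_const hk.
by rewrite PoszM mulrA mulrzA -(pmulrn _ (p ^ l)) mulrzA -pmulrn hu.
Qed.

End Hull.

Section QIso.
Variable A : zmodType.

Lemma Q_iso (D : A -> Prop) (x : A) : divisible_sub D -> D x ->
  (forall i, x *~ i = 0 -> i = 0) ->
  (forall z, D z -> exists (m : nat) (j : int), (0 < m)%N /\ z *+ m = x *~ j) ->
  (forall z m, D z -> (0 < m)%N -> z *+ m = 0 -> z = 0) ->
  sub_isomorphic D (fun _ : rat => True).
Proof.
move=> [sD dD] Dx xinf rk tf.
pose rt (mj : nat * int) : rat := mj.2%:~R / (mj.1%:Z)%:~R.
pose phi z := match pselect (exists mj : nat * int, (0 < mj.1)%N /\ z *+ mj.1 = x *~ mj.2) with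
  | left h => rt (sval (cid h)) | right _ => 0 end.
have key m j m' j' z : z *+ m = x *~ j -> z *+ m' = x *~ j' -> j * m'%:Z = j' * m%:Z.
  move=> h h'; apply/eqP; rewrite -subr_eq0; apply/eqP; apply: xinf.
  by rewrite mulrzBr !mulrzA -!pmulrn -h -h' -!mulrnA mulnC subrr.
have phiE (w : A) m j : (0 < m)%N -> w *+ m = x *~ j -> phi w = j%:~R / (m%:Z)%:~R.
  move=> m0 h; rewrite /phi; case: pselect => [hh|nh]; last first.
    by exfalso; apply: nh; exists (m, j).
  have [m'0 h'] := svalP (cid hh); move: (sval (cid hh)) m'0 h' => [m' j'] /= m'0 h'.
  have k := key _ _ _ _ _ h h'.
  have km : (m%:Z)%:~R != 0 :> rat by rewrite intr_eq0 eqz_nat -lt0n.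
  have km' : (m'%:Z)%:~R != 0 :> rat by rewrite intr_eq0 eqz_nat -lt0n.
  have k' : j%:~R * (m'%:Z)%:~R = j'%:~R * (m%:Z)%:~R :> rat by rewrite -!intrM k.
  by apply/eqP; rewrite /rt /= eqr_div // -!intrM k.
exists phi; split.
  move=> z z' Dz Dz'.
  have [m [j [m0 hz]]] := rk z Dz; have [m' [j' [m'0 hz']]] := rk z' Dz'.
  have hs : (z + z') *+ (m * m') = x *~ (j * m'%:Z + j' * m%:Z).
    rewrite mulrnDl mulrzDr !mulrzA -!pmulrn -hz -hz' mulrnA mulnC mulrnA //.
  rewrite (phiE _ _ _ _ hs) ?muln_gt0 ?m0 // (phiE _ _ _ m0 hz) (phiE _ _ _ m'0 hz').
  have km : (m%:Z)%:~R != 0 :> rat by rewrite intr_eq0 eqz_nat -lt0n.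
  have km' : (m'%:Z)%:~R != 0 :> rat by rewrite intr_eq0 eqz_nat -lt0n.
  rewrite intrD !intrM PoszM intrM; field; by apply/andP.
split => //; split.
  move=> z z' Dz Dz' e.
  have [m [j [m0 hz]]] := rk z Dz; have [m' [j' [m'0 hz']]] := rk z' Dz'.
  rewrite (phiE _ _ _ m0 hz) (phiE _ _ _ m'0 hz') in e.
  have km : (m%:Z)%:~R != 0 :> rat by rewrite intr_eq0 eqz_nat -lt0n.
  have km' : (m'%:Z)%:~R != 0 :> rat by rewrite intr_eq0 eqz_nat -lt0n.
  have e2 : (j * m'%:Z)%:~R = (j' * m%:Z)%:~R :> rat.
    by move/eqP: e; rewrite eqr_div // => /eqP; rewrite !intrM.
  move/intr_inj: e2 => e2.
  apply/eqP; rewrite -subr_eq0; apply/eqP; apply: (tf _ (m * m')%N); first exact: subB.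
    by rewrite muln_gt0 m0.
  rewrite mulrnBl mulrnA hz mulnC mulrnA hz' !pmulrn -!mulrzA.
  by rewrite e2 subrr.
move=> q _.
have dq : (0 < `|denq q|)%N by rewrite absz_gt0 denq_neq0.
have [d [Dd hd]] := dD (x *~ numq q) `|denq q|%N (subMz _ sD Dx) dq.
exists d; split => //.
rewrite (phiE _ _ _ dq hd) gtz0_abs ?denq_gt0 //.
exact: divq_num_den.
Qed.

End QIso.

Local Notation frac := Defs.frac.

Lemma qzvalD (a b : QZ) : qzval (a + b) = frac (qzval a + qzval b).
Proof. by []. Qed.

Lemma qzvalN (a : QZ) : qzval (- a) = frac (- qzval a).
Proof. by []. Qed.

Lemma qzval0 : qzval (0 : QZ) = 0.
Proof. by have -> : qzval (0 : QZ) = frac 0 by []; rewrite frac_id. Qed.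

Lemma qz_eq0 (a : QZ) : a = 0 <-> qzval a = 0.
Proof. by split => [->|h]; [exact: qzval0 | apply: val_inj; rewrite /= h; symmetry; exact: qzval0]. Qed.

Lemma frac_int (z : int) : frac z%:~R = 0.
Proof. by rewrite /frac intrKfloor subrr. Qed.

Lemma fracDr x y : frac (x + frac y) = frac (x + y).
Proof. by rewrite addrC fracDl addrC. Qed.

Lemma fracN_frac x : frac (- frac x) = frac (- x).
Proof.
have -> : - frac x = - x + (Num.floor x)%:~R by rewrite /frac opprB addrC.
exact: fracDz.
Qed.

Lemma qzvalMn (a : QZ) n : qzval (a *+ n) = frac (qzval a * n%:R).
Proof.
elim: n => [|n IH]; first by rewrite mulr0n mulr0 qzval0 frac_id.
by rewrite mulrS qzvalD IH fracDr mulrS mulrDr mulr1.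
Qed.

Lemma qzvalMz (a : QZ) (c : int) : qzval (a *~ c) = frac (qzval a * c%:~R).
Proof.
case: c => n; first by rewrite -pmulrn qzvalMn.
by rewrite NegzE mulrNz qzvalN -pmulrn qzvalMn fracN_frac intrN mulrN.
Qed.

Lemma frac_eq0 r : frac r = 0 -> r = (Num.floor r)%:~R.
Proof. by move/eqP; rewrite /frac subr_eq0 => /eqP. Qed.

Lemma qz_kill (a : QZ) n : a *+ n = 0 -> qzval a * n%:R = (Num.floor (qzval a * n%:R))%:~R.
Proof. by move/qz_eq0; rewrite qzvalMn => /frac_eq0. Qed.

Lemma qz_kill_int (a : QZ) n (t : int) : qzval a * n%:R = t%:~R -> a *+ n = 0.
Proof. by move=> h; apply/qz_eq0; rewrite qzvalMn h frac_int. Qed.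

Lemma qz_lc (x y : QZ) : (forall n, x *+ n = 0 -> y *+ n = 0) -> exists c : int, y = x *~ c.
Proof.
move=> ann.
set vx := qzval x; set vy := qzval y.
have dpos : (0 < denq vx)%R := denq_gt0 vx.
set N := `|denq vx|%N.
have hN : (N%:Z) = denq vx by rewrite /N gtz0_abs.
have NR : (N%:R : rat) = (denq vx)%:~R by rewrite -hN.
have xN : x *+ N = 0 by apply: (qz_kill_int (t := numq vx)); rewrite NR numqE.
have /qz_kill := ann _ xN; rewrite -/vy => hy.
set t := Num.floor (vy * N%:R) in hy.
have [u [v huv]] := Bezoutz (numq vx) (denq vx).
have g1 : gcdz (numq vx) (denq vx) = 1.
  by rewrite /gcdz; have := coprime_num_den vx; rewrite /coprime => /eqP ->.
rewrite g1 in huv.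
exists (u * t); apply: val_inj => /=.
rewrite qzvalMz -/vx.
have dnz : (denq vx)%:~R != 0 :> rat by rewrite intr_eq0 denq_neq0.
have e1 : vx * (u * t)%:~R = vy - (v * t)%:~R.
  have ex : vx = (numq vx)%:~R / (denq vx)%:~R by rewrite numqE mulfK.
  have ey : vy = t%:~R / (denq vx)%:~R by rewrite -hy NR mulfK.
  have huv' : (u%:~R * (numq vx)%:~R + v%:~R * (denq vx)%:~R : rat) = 1.
    by rewrite -!intrM -intrD huv.
  rewrite ey {1}ex !intrM.
  apply: (@mulIf _ ((denq vx)%:~R)) => //.
  have hnu : (numq vx)%:~R * u%:~R = 1 - v%:~R * (denq vx)%:~R :> rat.
    by apply: (addIr (v%:~R * (denq vx)%:~R)); rewrite subrK mulrC.
  have -> : (numq vx)%:~R / (denq vx)%:~R * (u%:~R * t%:~R) * (denq vx)%:~R =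
            (numq vx)%:~R * u%:~R * t%:~R :> rat by field.
  by rewrite hnu; field.
rewrite e1 -intrN fracDz frac_id //.
exact: qzvalP.
Qed.

Section PhiK.
Variable A : zmodType.

Definition phiK (c : nat -> A) p K (x : QZ) : A :=
  c K *~ Num.floor (qzval x * (p ^ K.+1)%N%:R).

Lemma qz_killE (x : QZ) n : x *+ n = 0 ->
  qzval x * n%:R = (Num.floor (qzval x * n%:R))%:~R.
Proof. exact: qz_kill. Qed.

Lemma phiK_add (c : nat -> A) p K (x y : QZ) : c K *+ (p ^ K.+1) = 0 ->
  x *+ (p ^ K.+1) = 0 -> y *+ (p ^ K.+1) = 0 ->
  phiK c p K (x + y) = phiK c p K x + phiK c p K y.
Proof.
move=> hc hx hy; rewrite /phiK.
set P := (p ^ K.+1)%N.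
move: (qz_killE hx) (qz_killE hy); rewrite -/P.
set ix := Num.floor (qzval x * P%:R); set iy := Num.floor (qzval y * P%:R) => ex ey.
have e : qzval (x + y) * P%:R = (ix + iy - Num.floor (qzval x + qzval y) * P%:Z)%:~R.
  by rewrite qzvalD /frac mulrBl mulrDl ex ey !intrD intrN intrM.
rewrite e intrKfloor mulrzBr mulrzDr -(mulrzA_C) -pmulrn hc mul0rz subr0 //.
Qed.

Lemma phiK_up (c : nat -> A) p K (x : QZ) : c K = c K.+1 *+ p ->
  x *+ (p ^ K.+1) = 0 -> phiK c p K x = phiK c p K.+1 x.
Proof.
move=> hc hx; rewrite /phiK.
have ex := qz_killE hx.
have e : qzval x * (p ^ K.+2)%N%:R = (Num.floor (qzval x * (p ^ K.+1)%N%:R) * p%:Z)%:~R.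
  by rewrite intrM -ex expnSr natrM mulrA.
by rewrite e intrKfloor hc pmulrn -mulrzA mulrC.
Qed.

Lemma phiK_inj (c : nat -> A) p K (x : QZ) : prime p -> c K *+ (p ^ K.+1) = 0 ->
  c K *+ (p ^ K) <> 0 -> x *+ (p ^ K.+1) = 0 -> phiK c p K x = 0 -> x = 0.
Proof.
move=> pp hc hc1 hx; rewrite /phiK => h0.
have ex := qz_killE hx.
set ix := Num.floor (qzval x * (p ^ K.+1)%N%:R) in ex h0.
have := order_pp pp hc hc1 h0.
have Ppos : (0 < (p ^ K.+1)%N%:R :> rat) by rewrite ltr0n expn_gt0 prime_gt0.
have ix0 : (0 <= ix)%R.
  have h : (0 : rat) <= ix%:~R.
    by rewrite -ex; apply: mulr_ge0; [case/andP: (qzvalP x) | exact: ltW].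
  by rewrite ler0z in h.
have ixP : (ix < (p ^ K.+1)%N%:Z)%R.
  have h : ix%:~R < (p ^ K.+1)%N%:R :> rat.
    by rewrite -ex -[X in _ < X]mul1r ltr_pM2r //; case/andP: (qzvalP x).
  have h' : ix%:~R < ((p ^ K.+1)%N%:Z)%:~R :> rat by [].
  by rewrite ltr_int in h'.
case: ix ix0 ixP ex {h0} => // n _ /= nlt ex hd.
have n0 : n = 0%N.
  apply/eqP; apply: contraT => nn.
  have np : (0 < n)%N by rewrite lt0n.
  move: (dvdn_leq np hd); rewrite leqNgt.
  by rewrite ltz_nat in nlt; rewrite nlt.
apply/qz_eq0; move: ex; rewrite n0 /= => /eqP; rewrite mulf_eq0 => /orP [/eqP //|].
by rewrite pnatr_eq0 expn_eq0 (gtn_eqF (prime_gt0 pp)).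
Qed.

Lemma phiK_surj (c : nat -> A) p K (j : int) : (0 < p)%N -> c K *+ (p ^ K.+1) = 0 ->
  let x := qz_of (j%:~R / (p ^ K.+1)%N%:R) in
  x *+ (p ^ K.+1) = 0 /\ phiK c p K x = c K *~ j.
Proof.
move=> p0 hc x.
set P := (p ^ K.+1)%N.
have Pnz : (P%:R : rat) != 0 by rewrite /P pnatr_eq0 expn_eq0 (gtn_eqF p0).
set f := Num.floor (j%:~R / P%:R : rat).
have e : qzval x * P%:R = (j - f * P%:Z)%:~R.
  rewrite /x /= /frac -/f intrB intrM mulrBl; congr (_ - _); first by rewrite mulfVK.
split; first exact: (qz_kill_int e).
rewrite /phiK -/P e intrKfloor mulrzBr mulrC mulrzA -pmulrn hc mul0rz subr0 //.
Qed.

End PhiK.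

Lemma fun_addE (F G : nat -> QZ) q : (F + G) q = F q + G q. Proof. by []. Qed.
Lemma fun_subE (F G : nat -> QZ) q : (F - G) q = F q - G q. Proof. by []. Qed.
Lemma fun_0E q : (0 : nat -> QZ) q = 0. Proof. by []. Qed.
Lemma fun_mulnE (F : nat -> QZ) n q : (F *+ n) q = F q *+ n.
Proof. elim: n => [|n IH]; first by rewrite !mulr0n. by rewrite !mulrS -IH. Qed.

Lemma sub_iso_sym (A B : zmodType) (S : A -> Prop) (T : B -> Prop) :
  is_subgroup S -> sub_isomorphic S T -> sub_isomorphic T S.
Proof.
move=> sS [f [af [fT [finj fsurj]]]].
pose g b := match pselect (exists a, S a /\ f a = b) with
  | left h => sval (cid h) | right _ => 0 end.
have gP b : T b -> S (g b) /\ f (g b) = b.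
  move=> Tb; rewrite /g; case: pselect => [h|nh]; first exact: svalP (cid h).
  by exfalso; apply: nh; apply: fsurj.
exists g; split.
  move=> b b' Tb Tb'; have [Sb fb] := gP b Tb; have [Sb' fb'] := gP b' Tb'.
  have Sbb : S (g b + g b') by apply: subD.
  have Tbb : T (b + b') by rewrite -fb -fb' -af //; apply: fT.
  have [S1 f1] := gP _ Tbb.
  by apply: finj => //; rewrite f1 af // fb fb'.
split; first by move=> b Tb; case: (gP b Tb).
split.
  move=> b b' Tb Tb' e; by rewrite -(gP b Tb).2 -(gP b' Tb').2 e.
move=> a Sa; exists (f a); split; first exact: fT.
have [S1 f1] := gP _ (fT a Sa); exact: finj.
Qed.

Section Prim.
Variable A : zmodType.

Lemma prim_ind (S Q : A -> Prop) : is_subgroup S -> Q 0 ->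
  (forall a b, S a -> S b -> Q a -> Q b -> Q (a + b)) ->
  (forall p s t, prime p -> S t -> t *+ p ^ s = 0 -> Q t) ->
  forall m t, (0 < m)%N -> S t -> t *+ m = 0 -> Q t.
Proof.
move=> sS Q0 QD Qp; elim/ltn_ind => m IH t m0 St ht.
case: (ltngtP m 1) => [|m1|m1].
- by rewrite ltnNge m0.
- have pp := pdiv_prime m1; set p := pdiv m in pp.
  have [k' cpk hk] := pfactor_coprime pp m0; set l := logn p m in hk.
  have l0 : (0 < l)%N by rewrite /l logn_gt0 mem_primes pp m0 pdiv_dvd.
  have k0 : (0 < k')%N by move: m0; rewrite hk muln_gt0 => /andP [].
  have km : (k' < m)%N.
    rewrite [in X in (_ < X)%N]hk -[X in (X < _)%N]muln1 ltn_pmul2l //.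
    by rewrite -(expn0 p) ltn_exp2l ?prime_gt1.
  have cop : coprime k' (p ^ l) by rewrite coprimeXr // coprime_sym.
  have [u [v huv]] := Bezoutz k'%:Z (p ^ l)%:Z.
  have g1 : gcdz k'%:Z (p ^ l)%:Z = 1 by rewrite /gcdz /= (eqP cop).
  rewrite g1 in huv.
  have -> : t = t *~ (u * k'%:Z) + t *~ (v * (p ^ l)%:Z).
    by rewrite -mulrzDr huv mulr1z.
  have hmz : t *~ m%:Z = 0 by rewrite -pmulrn.
  apply: QD; [exact: subMz | exact: subMz | |].
    apply: (Qp p l (t *~ (u * k'%:Z))) => //; first exact: subMz.
    rewrite pmulrn -mulrzA -mulrA -PoszM -hk (mulrC u) mulrzA hmz mul0rz //.
  apply: (IH k') => //; first by apply: subMz.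
  rewrite pmulrn -mulrzA -mulrA -PoszM mulnC -hk (mulrC v) mulrzA hmz mul0rz //.
- by rewrite m1 mulr1n in ht; rewrite ht.
Qed.

Lemma sum_stable (g : nat -> A) N1 N2 : (forall q, (N1 <= q)%N -> g q = 0) ->
  (forall q, (N2 <= q)%N -> g q = 0) ->
  \sum_(0 <= q < N1) g q = \sum_(0 <= q < N2) g q.
Proof.
wlog le12 : N1 N2 / (N1 <= N2)%N.
  move=> W h1 h2; case: (leqP N1 N2) => [le|lt]; first exact: W.
  by symmetry; apply: W => //; apply: ltnW.
move=> h1 _; rewrite [RHS](big_cat_nat (n := N1)) //=.
have -> : \sum_(N1 <= i < N2) g i = 0.
  by rewrite big_nat_cond big1 // => i /andP [/andP [hi _] _]; apply: h1.
by rewrite addr0.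
Qed.

Lemma killer (y : nat -> A) : forall N r, (N <= r)%N -> prime r ->
  (forall q, (q < N)%N -> y q = 0 \/ (prime q /\ exists s, y q *+ q ^ s = 0)) ->
  exists M, coprime M r /\ (\sum_(0 <= q < N) y q) *+ M = 0.
Proof.
elim => [|N IH] r Nr pr hy.
  by exists 1%N; split; [exact: coprime1n | rewrite big_geq // mul0rn].
have [M0 [cM0 hM0]] := IH r (ltnW Nr) pr (fun q hq => hy q (ltnW hq)).
rewrite big_nat_recr //=.
case: (hy N (ltnSn N)) => [->|[pN [s hs]]].
  by exists M0; rewrite addr0.
exists (M0 * N ^ s)%N; split.
  rewrite coprimeMl cM0 /= coprimeXl // coprime_sym prime_coprime //.
  apply/negP => /(dvdn_leq (prime_gt0 pN)); rewrite leqNgt.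
  by rewrite Nr.
rewrite mulrnDl mulrnA hM0 mul0rn add0r mulnC mulrnA hs mul0rn //.
Qed.

Lemma indep (y : nat -> A) : forall N,
  (forall q, (q < N)%N -> y q = 0 \/ (prime q /\ exists s, y q *+ q ^ s = 0)) ->
  \sum_(0 <= q < N) y q = 0 -> forall q, (q < N)%N -> y q = 0.
Proof.
elim => [|N IH] hy hs q; first by [].
have hy' q' : (q' < N)%N -> y q' = 0 \/ (prime q' /\ exists s, y q' *+ q' ^ s = 0).
  by move=> h; apply: hy; apply: ltnW.
move: hs; rewrite big_nat_recr //= => hs.
have yN : y N = 0.
  case: (hy N (ltnSn N)) => [//|[pN [s hsN]]].
  have [M [cM hM]] := killer (leqnn N) pN hy'.
  apply: (coprime_kill (a := N ^ s) (b := M)) => //.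
    have -> : y N = - \sum_(0 <= q < N) y q.
      by apply/eqP; rewrite -addr_eq0 addrC hs.
    by rewrite mulNrn hM oppr0.
  by rewrite coprimeXl // coprime_sym.
rewrite yN addr0 in hs.
rewrite ltnS leq_eqVlt => /orP [/eqP ->|]; first exact: yN.
exact: IH.
Qed.

End Prim.

Lemma funBg (Gt : zmodType) (F G : nat -> Gt) q : (F - G) q = F q - G q. Proof. by []. Qed.

Lemma ext_sub (Gt : zmodType) (P : set nat) (H : nat -> Gt -> Prop) :
  (forall p, P p -> is_subgroup (H p)) -> is_subgroup (ext_dsum P H).
Proof.
move=> sH; split.
  split; first by [].
  by split; [move=> p Pp; exact: sub0 (sH p Pp) | exists 0%N].
move=> F G [F1 [F2 [NF hNF]]] [G1 [G2 [NG hNG]]]; split.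
  by move=> p nP; rewrite funBg F1 // G1 // subrr.
split; first by move=> p Pp; rewrite funBg; apply: subB (sH p Pp) _ _; [apply: F2 | apply: G2].
exists (maxn NF NG) => p hp; rewrite funBg hNF ?hNG ?subrr //.
  exact: leq_trans (leq_maxr _ _) hp.
exact: leq_trans (leq_maxl _ _) hp.
Qed.

Section Build.
Variable A : zmodType.
Variables (S : A -> Prop) (P : set nat) (H : nat -> QZ -> Prop) (phi : nat -> QZ -> A).
Hypothesis sS : is_subgroup S.
Hypothesis torS : forall z, S z -> exists m, (0 < m)%N /\ z *+ m = 0.
Hypothesis Pprime : set_of_primes P.
Hypothesis sH : forall p, P p -> is_subgroup (H p).
Hypothesis Htor : forall p, P p -> forall x, H p x -> exists s, x *+ p ^ s = 0.
Hypothesis phiD : forall p, P p -> forall x y, H p x -> H p y -> phi p (x + y) = phi p x + phi p y.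
Hypothesis phiS : forall p, P p -> forall x, H p x -> S (phi p x).
Hypothesis phiI : forall p, P p -> forall x, H p x -> phi p x = 0 -> x = 0.
Hypothesis phiO : forall p s z, prime p -> S z -> z *+ p ^ s = 0 ->
  z = 0 \/ (P p /\ exists x, H p x /\ phi p x = z).

Let phi' q x := match pselect (P q) with left _ => phi q x | right _ => 0 end.

Let phi'E q x : P q -> phi' q x = phi q x.
Proof. by rewrite /phi'; case: pselect. Qed.
Let phi'N q x : ~ P q -> phi' q x = 0.
Proof. by rewrite /phi'; case: pselect. Qed.
Let phi0 q : P q -> phi q 0 = 0.
Proof.
move=> Pq; have h := phiD Pq (sub0 (sH Pq)) (sub0 (sH Pq)); rewrite addr0 in h.
by rewrite -[LHS](addrK (phi q 0)) -h subrr.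
Qed.
Let phi'0 q : phi' q 0 = 0.
Proof. by rewrite /phi'; case: pselect => // Pq; apply: phi0. Qed.
Let phiMn q x n : P q -> H q x -> phi q (x *+ n) = phi q x *+ n.
Proof.
move=> Pq Hx; elim: n => [|n IH]; first by rewrite !mulr0n phi0.
by rewrite !mulrS phiD ?IH //; apply: subMn (sH Pq) Hx.
Qed.

Let bnd (F : nat -> QZ) := match pselect (exists N, forall q, (N <= q)%N -> F q = 0) with
  | left h => sval (cid h) | right _ => 0%N end.
Let Phi F := \sum_(0 <= q < bnd F) phi' q (F q).

Let PhiE F N : ext_dsum P H F -> (forall q, (N <= q)%N -> F q = 0) ->
  Phi F = \sum_(0 <= q < N) phi' q (F q).
Proof.
move=> [_ [_ hex]] hN; rewrite /Phi /bnd; case: pselect => [h|nh]; last by exfalso.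
apply: sum_stable => q hq; last by rewrite hN.
by rewrite (svalP (cid h) q hq).
Qed.

Let extS := ext_sub sH.

Let PhiD F G : ext_dsum P H F -> ext_dsum P H G -> Phi (F + G) = Phi F + Phi G.
Proof.
move=> eF eG; have [_ [_ [NF hNF]]] := eF; have [_ [_ [NG hNG]]] := eG.
have hF q : (maxn NF NG <= q)%N -> F q = 0.
  by move=> hq; apply: hNF; exact: leq_trans (leq_maxl _ _) hq.
have hG q : (maxn NF NG <= q)%N -> G q = 0.
  by move=> hq; apply: hNG; exact: leq_trans (leq_maxr _ _) hq.
have eFG : ext_dsum P H (F + G) by apply: subD extS eF eG.
rewrite (PhiE eFG (N := maxn NF NG)); last by move=> q hq; rewrite fun_addE hF ?hG ?addr0.
rewrite (PhiE eF hF) (PhiE eG hG) -big_split /=.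
apply: eq_bigr => q _; rewrite fun_addE.
case: (pselect (P q)) => Pq; last by rewrite !phi'N // addr0.
rewrite !phi'E //; apply: phiD => //; [exact: eF.2.1 | exact: eG.2.1].
Qed.

Let PhiS F : ext_dsum P H F -> S (Phi F).
Proof.
move=> eF; rewrite /Phi; apply: (big_ind S); [exact: sub0 | by move=> *; apply: subD |].
move=> q _; case: (pselect (P q)) => Pq; last by rewrite phi'N //; exact: sub0.
by rewrite phi'E //; apply: phiS => //; apply: eF.2.1.
Qed.

Let Phi0 F : ext_dsum P H F -> Phi F = 0 -> F = 0.
Proof.
move=> eF h0; have [F1 [F2 [N hN]]] := eF.
rewrite (PhiE eF hN) in h0.
have hy : forall q, (q < N)%N -> phi' q (F q) = 0 \/
    (prime q /\ exists s, phi' q (F q) *+ q ^ s = 0).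
  move=> q _; case: (pselect (P q)) => Pq; last by left; rewrite phi'N.
  right; split; first exact: Pprime.
  have [s hs] := Htor Pq (F2 q Pq); exists s.
  by rewrite phi'E // -phiMn ?hs ?phi0 //; apply: F2.
have := indep hy h0 => hz.
apply: funext => q; rewrite fun_0E.
case: (ltnP q N) => hq; last exact: hN.
case: (pselect (P q)) => Pq; last exact: F1.
by apply: (phiI Pq (F2 q Pq)); rewrite -phi'E // hz.
Qed.

Lemma build_iso : sub_isomorphic S (ext_dsum P H).
Proof.
apply: sub_iso_sym => //.
exists Phi; split; first exact: PhiD.
split; first exact: PhiS.
split.
  move=> F G eF eG e.
  have eFG : ext_dsum P H (F - G) by apply: subB extS eF eG.
  have : Phi (F - G) = 0.
    have := PhiD eFG eG; rewrite subrK e => h.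
    by apply: (addIr (Phi G)); rewrite add0r -h.
  by move/(Phi0 eFG)/eqP; rewrite subr_eq0 => /eqP.
move=> z Sz; have [m [m0 hm]] := torS Sz.
pose Q z := exists F, ext_dsum P H F /\ Phi F = z.
have Q0 : Q 0.
  exists 0; split; first exact: sub0 extS.
  by rewrite (PhiE (N := 0%N) (sub0 extS)) ?big_geq.
apply: (prim_ind (Q := Q) sS Q0 _ _ m0 Sz hm).
  move=> a b _ _ [F [eF <-]] [G [eG <-]]; exists (F + G); split; first exact: subD extS eF eG.
  exact: PhiD.
move=> p s t pp St ht; case: (phiO pp St ht) => [->|[Pp [x [Hx hx]]]] //.
pose F q := if q == p then x else 0.
have eF : ext_dsum P H F.
  split; first by move=> q nPq; rewrite /F; case: eqP => // eq; exfalso; apply: nPq; rewrite eq.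
  split; first by move=> q Pq; rewrite /F; case: eqP => [->//|_]; exact: sub0 (sH Pq).
  by exists p.+1 => q hq; rewrite /F; case: eqP => // eq; move: hq; rewrite eq ltnn.
exists F; split => //.
rewrite (PhiE eF (N := p.+1)); last by move=> q hq; rewrite /F; case: eqP => // eq; move: hq; rewrite eq ltnn.
rewrite big_nat_recr //= big_nat_cond big1 ?add0r.
  by rewrite /F eqxx phi'E.
move=> q /andP [/andP [_ hq] _]; rewrite /F; case: eqP => [eq|_]; last exact: phi'0.
by move: hq; rewrite eq ltnn.
Qed.

End Build.

Lemma ppow_kill_add (A : zmodType) (x y : A) p a b :
  x *+ p ^ a = 0 -> y *+ p ^ b = 0 -> (x + y) *+ p ^ (a + b) = 0.
Proof.
move=> hx hy; rewrite mulrnDl expnD mulrnA hx mul0rn add0r mulnC mulrnA hy mul0rn //.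
Qed.

Section Fwd.
Variable A : zmodType.
Variables D R : A -> Prop.
Variable pi : A -> A.
Hypothesis Dpart : is_divisible_part D.
Hypothesis sR : is_subgroup R.
Hypothesis CE : End_centrally_essential A.
Hypothesis nzD : nonzero_sub D.
Hypothesis epi : is_endo pi.
Hypothesis piD : forall a, D (pi a).
Hypothesis piR : forall a, R (a - pi a).
Hypothesis piDd : forall d, D d -> pi d = d.
Hypothesis piRr : forall r, R r -> pi r = 0.

Let dD : divisible_sub D := Dpart.1.
Let sD : is_subgroup D := dD.1.

Lemma pi_idem z : pi (pi z) = pi z.
Proof. exact: piDd. Qed.

Lemma DR0 x : D x -> R x -> x = 0.
Proof. by move=> hD hR; rewrite -(piDd hD) piRr. Qed.

Lemma RD_zero f : is_endo f -> forall r, R r -> pi (f r) = 0.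
Proof.
move=> ef r hr; have := idem_lemma CE epi pi_idem ef r.
by rewrite (piRr hr) subr0.
Qed.

Lemma R_torsion r : R r -> exists m, (0 < m)%N /\ r *+ m = 0.
Proof.
move=> hr; case: (pselect (exists m, (0 < m)%N /\ r *+ m = 0)) => // nt; exfalso.
have [d0 [Dd0 nd0]] := nzD.
have ann : forall i, r *~ i = 0 -> d0 *~ i = 0.
  move=> i /mulrz_abs0 h; case: (posnP `|i|%N) => [/eqP|ip].
    by rewrite absz_eq0 => /eqP ->; rewrite mulr0z.
  by exfalso; apply: nt; exists `|i|%N.
have [f [ef [Df fr]]] := div_map dD Dd0 ann.
by have := RD_zero ef hr; rewrite fr piDd.
Qed.

Lemma Rp_Dp p r d : prime p -> R r -> r <> 0 -> r *+ p = 0 -> D d -> d *+ p = 0 -> d = 0.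
Proof.
move=> pp hr rn rp hd dp.
have ann : forall i, r *~ i = 0 -> d *~ i = 0.
  move=> i hi; apply: (kill_dvd (n := p)) => //.
  have := @order_pp _ p 1 r i pp; rewrite expn1 /= expn0 mulr1n; apply => //.
have [f [ef [Df fr]]] := div_map dD hd ann.
by have := RD_zero ef hr; rewrite fr piDd.
Qed.

Lemma fin_height p : prime p -> (exists r, [/\ R r, r <> 0 & r *+ p = 0]) ->
  exists a, [/\ R a, a <> 0, a *+ p = 0 & exists n, ~ exists z, R z /\ a = z *+ p ^ n].
Proof.
move=> pp [r0 [Rr0 nr0 pr0]].
case: (pselect (exists a, [/\ R a, a <> 0, a *+ p = 0 &
   exists n, ~ exists z, R z /\ a = z *+ p ^ n])) => // nH; exfalso.
have H : forall a, R a -> a *+ p = 0 -> forall n, exists z, R z /\ a = z *+ p ^ n.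
  move=> a Ra pa n; case: (pselect (a = 0)) => [->|an].
    by exists 0; split; [exact: sub0 | rewrite mul0rn].
  case: (pselect (exists z, R z /\ a = z *+ p ^ n)) => // hn; exfalso; apply: nH.
  by exists a; split => //; exists n.
pose Rp x := R x /\ exists s, x *+ p ^ s = 0.
have pdiv : forall s x, R x -> x *+ p ^ s = 0 -> exists y, Rp y /\ x = y *+ p.
  elim => [|s IH] x Rx hx.
    rewrite expn0 mulr1n in hx; rewrite hx; exists 0; split; last by rewrite mul0rn.
    by split; [exact: sub0 | exists 0%N; rewrite mul0rn].
  have Rx' : R (x *+ p ^ s) by apply: subMn.
  have hx'p : (x *+ p ^ s) *+ p = 0 by rewrite -mulrnA -expnSr.
  have [z [Rz hz]] := H _ Rx' hx'p s.+1.
  have hxz : (x - z *+ p) *+ p ^ s = 0.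
    by rewrite mulrnBl -mulrnA -expnS -hz subrr.
  have [w [[Rw [sw hw]] hxw]] := IH _ (subB sR Rx (subMn _ sR Rz)) hxz.
  exists (z + w); split.
    split; first exact: subD.
    exists (s.+2 + sw)%N; apply: ppow_kill_add => //.
    by rewrite expnS mulnC mulrnA -hz -mulrnA -expnSr.
  by rewrite mulrnDl -hxw subrKC.
have powdiv : forall al x, Rp x -> exists y, Rp y /\ x = y *+ p ^ al.
  elim => [|al IH] x Rpx; first by exists x; rewrite expn0 mulr1n.
  have [y [Rpy ->]] := IH _ Rpx.
  have [y' [Rpy' ->]] := pdiv _ _ Rpy.1 (svalP (cid Rpy.2)).
  by exists y'; split => //; rewrite -mulrnA -expnS.
have copdiv : forall x k, Rp x -> coprime p k -> exists y, Rp y /\ x = y *+ k.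
  move=> x k [Rx [s hs]] cpk; have [u hu] := coprime_div hs cpk.
  exists (x *~ u); split => //; split; first exact: subMz.
  by exists s; rewrite pmulrn mulrzAC -pmulrn hs mul0rz.
have divRp : divisible_sub Rp.
  split.
    split; first by split; [exact: sub0 | exists 0%N; rewrite mul0rn].
    move=> x y [Rx [s hs]] [Ry [s' hs']]; split; first exact: subB.
    exists (s + s')%N; apply: ppow_kill_add => //.
    by rewrite mulNrn hs' oppr0.
  move=> x n Rpx n0; have [k' cpk' hn] := pfactor_coprime pp n0.
  have [y1 [Rpy1 e1]] := copdiv _ _ Rpx cpk'.
  have [y2 [Rpy2 e2]] := powdiv (logn p n) _ Rpy1.
  by exists y2; split => //; rewrite hn mulnC mulrnA -e2 -e1.
have Rpr0 : Rp r0 by split => //; exists 1%N; rewrite expn1.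
by apply: nr0; apply: DR0 => //; apply: Dpart.2 divRp _ Rpr0.
Qed.

Lemma R_struct p : prime p -> (exists r, [/\ R r, r <> 0 & r *+ p = 0]) ->
  exists b m, [/\ R b, (0 < m)%N, b *+ p ^ m = 0, b *+ p ^ m.-1 <> 0 &
     forall z s, z *+ p ^ s = 0 -> cyc b z].
Proof.
move=> pp hr; have [a [Ra an ap [n hn]]] := fin_height pp hr.
pose P k := `[< ~ exists z, R z /\ a = z *+ p ^ k >].
have hP : exists k, P k by exists n; apply/asboolP.
case: (ex_minnP hP) => m /asboolP Pm mmin.
case: m Pm mmin => [|m'] Pm mmin.
  by exfalso; apply: Pm; exists a; rewrite expn0 mulr1n.
have [b [Rb hab]] : exists b, R b /\ a = b *+ p ^ m'.
  case: (pselect (exists z, R z /\ a = z *+ p ^ m')) => // hnz; exfalso.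
  have : P m' by apply/asboolP.
  by move/mmin; rewrite ltnn.
have hm : b *+ p ^ m'.+1 = 0 by rewrite expnSr mulrnA -hab.
have hm1 : b *+ p ^ m'.+1.-1 <> 0 by rewrite /= -hab.
have pureR j z : R z -> b *~ j = z *+ p ^ m'.+1 -> b *~ j = 0.
  move=> Rz hj; case: (pselect (b *~ j = 0)) => // bj0; exfalso.
  have : (gcdn `|j| (p ^ m'.+1) %| p ^ m'.+1)%N by apply: dvdn_gcdr.
  case/(dvdn_pfactor _ _ pp) => e le_em ge.
  case: (eqVneq e m'.+1) => [em|nem].
    apply: bj0; apply: (kill_dvd (n := p ^ m'.+1)) => //.
    by rewrite -em -ge dvdn_gcdl.
  have lt : (e <= m')%N by rewrite -ltnS ltn_neqAle nem le_em.
  have [u [v huv]] := Bezoutz j (p ^ m'.+1)%:Z.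
  have g' : gcdz j (p ^ m'.+1)%:Z = (p ^ e)%:Z by rewrite /gcdz /= ge.
  have hbe : b *+ p ^ e = (z *~ u) *+ p ^ m'.+1.
    rewrite pmulrn -g' -huv mulrzDr (mulrC v) (mulrzA b (p ^ m'.+1)%:Z v) -(pmulrn b) hm.
    by rewrite mul0rz addr0 (mulrC u) (mulrzA b j u) hj pmulrn mulrzAC pmulrn.
  apply: Pm; exists ((z *~ u) *+ p ^ (m' - e)); split.
    by apply: subMn => //; apply: subMz.
  have hb' : b *+ p ^ m' = (b *+ p ^ e) *+ p ^ (m' - e) by rewrite -mulrnA -expnD subnKC.
  by rewrite hab hb' hbe -!mulrnA mulnC.
have pureA j z : b *~ j = z *+ p ^ m'.+1 -> b *~ j = 0.
  move=> hj; apply: (pureR j (z - pi z)) => //.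
  have Rbj : R (b *~ j) by apply: subMz.
  rewrite -[LHS]subr0 -(piRr Rbj) hj (endoMn _ _ epi).
  by rewrite mulrnBl.
have [e [ee Te eb]] := cyc_pure_proj pp hm hm1 pureA.
exists b, m'.+1; split => //.
exact: (proj_absorbs CE pp _ hm hm1 ee Te eb).
Qed.

Lemma cycQZ_sub n : is_subgroup (cyclic_QZ n).
Proof.
rewrite /cyclic_QZ; split; first by rewrite mul0rn.
by move=> x y hx hy; rewrite mulrnBl hx hy subrr.
Qed.

Lemma prufer_sub p : is_subgroup (prufer_QZ p).
Proof.
rewrite /prufer_QZ; split; first by exists 0%N; rewrite mul0rn.
move=> x y [a ha] [b hb]; exists (a + b)%N; apply: ppow_kill_add => //.
by rewrite mulNrn hb oppr0.
Qed.

Definition P'set p := prime p /\ exists r, [/\ R r, r <> 0 & r *+ p = 0].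

Lemma R_iso : exists k : nat -> nat, (forall p, P'set p -> (0 < k p)%N) /\
  sub_isomorphic R (ext_dsum P'set (fun p => cyclic_QZ (p ^ k p))).
Proof.
pose prop p (bm : A * nat) := [/\ R bm.1, (0 < bm.2)%N, bm.1 *+ p ^ bm.2 = 0,
   bm.1 *+ p ^ bm.2.-1 <> 0 & forall z s, z *+ p ^ s = 0 -> cyc bm.1 z].
pose pick p := match pselect (exists bm, prop p bm) with
  | left h => sval (cid h) | right _ => (0, 0%N) end.
have pickP p : P'set p -> prop p (pick p).
  move=> [pp hr]; rewrite /pick; case: pselect => [h|nh]; first exact: svalP (cid h).
  exfalso; apply: nh; have [b [m [Rb m0 hm hm1 hc]]] := R_struct pp hr.
  by exists (b, m); split.
exists (fun p => (pick p).2); split; first by move=> p /pickP [].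
apply: (build_iso (phi := fun p x => phiK (fun _ => (pick p).1) p (pick p).2.-1 x)).
- exact: sR.
- exact: R_torsion.
- by move=> p [].
- by move=> p _; apply: cycQZ_sub.
- by move=> p _ x hx; exists (pick p).2.
- move=> p Pp x y hx hy; have [Rb m0 hm hm1 hc] := pickP p Pp.
  by apply: phiK_add; rewrite prednK.
- move=> p Pp x _; have [Rb m0 hm hm1 hc] := pickP p Pp.
  by rewrite /phiK; apply: subMz.
- move=> p Pp x hx; have [Rb m0 hm hm1 hc] := pickP p Pp.
  by apply: phiK_inj; rewrite ?prednK //; case: Pp.
move=> p s z pp Rz hz; case: (pselect (z = 0)) => [->|nz]; first by left.
right.
have Pp : P'set p.
  split => //; have [t [wn wp]] := last_nonzero nz hz.
  by exists (z *+ p ^ t); split => //; apply: subMn.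
split => //; have [Rb m0 hm hm1 hc] := pickP p Pp.
have [j ->] := hc z s hz.
have hm' : (fun _ : nat => (pick p).1) (pick p).2.-1 *+ p ^ (pick p).2.-1.+1 = 0.
  by rewrite prednK.
have [hx he] := phiK_surj (c := fun _ => (pick p).1) (K := (pick p).2.-1) j (prime_gt0 pp) hm'.
move: hx he; set x := (qz_of _); move=> hx he.
exists x; split => //.
by move: hx; rewrite prednK.
Qed.

Lemma D_iso : sub_isomorphic D (fun _ : rat => True) \/
  exists P'' : set nat, set_of_primes P'' /\ (forall p, P'set p -> ~ P'' p) /\
    sub_isomorphic D (ext_dsum P'' prufer_QZ).
Proof.
case: (pselect (exists x, D x /\ forall m, (0 < m)%N -> x *+ m <> 0)) => [[x [Dx xinf]]|nt].
  left.
  have xinf' : forall i, x *~ i = 0 -> i = 0.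
    move=> i /mulrz_abs0 h; apply/eqP; rewrite -absz_eq0; apply/eqP.
    by case: (posnP `|i|%N) => // ip; exfalso; apply: (xinf _ ip).
  have [c [c0 Dc cP cD dC]] := Qchain dD Dx.
  have [e [ee Te he]] := proj_onto dC.
  have Tx : chainset c x by exists 0%N, 1; rewrite mulr1z.
  have absorb z : D z -> chainset c z.
    move=> Dz; have Dez : D (e z) by apply: cD.
    have Dw : D (z - e z) by apply: subB.
    have ew : e (z - e z) = 0 by rewrite (endoB _ _ ee) (he _ (Te z)) subrr.
    have ann : forall i, x *~ i = 0 -> (z - e z) *~ i = 0.
      by move=> i /xinf' ->; rewrite mulr0z.
    have := hull_core CE dD ee Te he Tx Dw ew ann.
    by move/eqP; rewrite subr_eq0 => /eqP ->.
  apply: (Q_iso dD Dx xinf').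
    move=> z /absorb [n [j ->]]; have [P [P0 hP]] := cP n.
    by exists P, j; split => //; rewrite pmulrn mulrzAC -pmulrn hP.
  move=> z m /absorb [n [j ->]] m0 hz; have [P [P0 hP]] := cP n.
  have : x *~ (j * m%:Z) = 0.
    have hz' : c n *~ (j * m%:Z) = 0 by rewrite mulrzA -pmulrn hz.
    by rewrite -hP pmulrn -mulrzA mulrC mulrzA hz' mul0rz.
  move/xinf'/eqP; rewrite mulf_eq0 => /orP [/eqP ->|]; first by rewrite mulr0z.
  by rewrite eqz_nat => /eqP m00; move: m0; rewrite m00.
right.
have torD : forall z, D z -> exists m, (0 < m)%N /\ z *+ m = 0.
  move=> z Dz; case: (pselect (exists m, (0 < m)%N /\ z *+ m = 0)) => // h.
  by exfalso; apply: nt; exists z; split => // m m0 hm; apply: h; exists m.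
pose P'' p := prime p /\ exists d, [/\ D d, d <> 0 & d *+ p = 0].
pose prop p (c : nat -> A) := [/\ c 0%N <> 0 /\ c 0%N *+ p = 0, (forall n, D (c n)),
   (forall n, c n.+1 *+ p = c n), (forall n, c n *+ p ^ n = c 0%N) &
   (forall z s, D z -> z *+ p ^ s = 0 -> chainset c z)].
have propE p : P'' p -> exists c, prop p c.
  move=> [pp [d0 [Dd0 nd0 hd0]]].
  have [c [c0 Dc hc cpow dC]] := Pchain pp dD Dd0 hd0.
  exists c; split; [by rewrite c0 | exact: Dc | exact: hc | by move=> n; rewrite c0 | ].
  have [e [ee Te he]] := proj_onto dC.
  have cD z : chainset c z -> D z by move=> [n [j ->]]; apply: subMz.
  have Td0 : chainset c d0 by exists 0%N, 1; rewrite mulr1z c0.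
  move=> z s Dz hz.
  have Dez : D (e z) by apply: cD.
  have Dw : D (z - e z) by apply: subB.
  have ew : e (z - e z) = 0 by rewrite (endoB _ _ ee) (he _ (Te z)) subrr.
  case: (pselect (z - e z = 0)) => [h|h].
    by move/eqP: h; rewrite subr_eq0 => /eqP ->.
  have [n [j hj]] := Te z.
  have hw : (z - e z) *+ p ^ (s + n.+1) = 0.
    apply: ppow_kill_add => //; rewrite mulNrn hj pmulrn mulrzAC -pmulrn.
    by rewrite expnSr mulrnA cpow hd0 mul0rz oppr0.
  have [t [wn wp]] := last_nonzero h hw.
  exfalso; apply: wn.
  apply: (hull_core CE dD ee Te he Td0).
  - by apply: subMn.
  - by rewrite (endoMn _ _ ee) ew mul0rn.
  move=> i hi; apply: (kill_dvd (n := p)) => //.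
  have := @order_pp _ p 1 d0 i pp; rewrite expn1 /= expn0 mulr1n; apply => //.
pose pch p := match pselect (exists c, prop p c) with
  | left h => sval (cid h) | right _ => fun _ => 0 end.
have pchP p : P'' p -> prop p (pch p).
  by move=> Pp; rewrite /pch; case: pselect => [h|nh]; [exact: svalP (cid h) | exfalso; apply: nh; apply: propE].
pose Kof p (x : QZ) := match pselect (exists K, x *+ p ^ K.+1 = 0) with
  | left h => sval (cid h) | right _ => 0%N end.
pose phi p x := phiK (pch p) p (Kof p x) x.
have lvl p K x t : P'' p -> x *+ p ^ K.+1 = 0 -> phiK (pch p) p K x = phiK (pch p) p (K + t) x.
  move=> Pp hx; have [_ _ hc _ _] := pchP p Pp.
  elim: t => [|t IH]; first by rewrite addn0.
  rewrite IH addnS; apply: phiK_up; first by rewrite hc.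
  by rewrite -addSn expnD mulrnA hx mul0rn.
have phiE p K x : P'' p -> x *+ p ^ K.+1 = 0 -> phi p x = phiK (pch p) p K x.
  move=> Pp hx; rewrite /phi /Kof; case: pselect => [h|nh]; last by exfalso; apply: nh; exists K.
  have hK := svalP (cid h); move: (sval (cid h)) hK => K' hK.
  by rewrite (lvl p K' x K Pp hK) (lvl p K x K' Pp hx) addnC.
exists P''; split; first by move=> p [].
split.
  move=> p [pp [r [Rr rn rp]]] [_ [d [Dd dn dp]]].
  by apply: dn; apply: (Rp_Dp pp Rr rn rp Dd dp).
apply: (build_iso (phi := phi)).
- exact: sD.
- exact: torD.
- by move=> p [].
- by move=> p _; apply: prufer_sub.
- by move=> p _ x [k hk]; exists k.
- move=> p Pp x y [a ha] [b hb].
  have [[_ h0] _ _ cpow _] := pchP p Pp.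
  have hx : x *+ p ^ (a + b).+1 = 0 by rewrite -addSn expnD mulrnA expnSr mulrnA ha !mul0rn.
  have hy : y *+ p ^ (a + b).+1 = 0 by rewrite -addSn expnD mulnC mulrnA hb !mul0rn.
  have hxy : (x + y) *+ p ^ (a + b).+1 = 0 by rewrite mulrnDl hx hy addr0.
  rewrite (phiE _ _ _ Pp hx) (phiE _ _ _ Pp hy) (phiE _ _ _ Pp hxy).
  by apply: phiK_add => //; rewrite expnSr mulrnA cpow h0.
- move=> p Pp x _; have [_ Dc _ _ _] := pchP p Pp.
  by rewrite /phi /phiK; apply: subMz.
- move=> p Pp x [a ha]; have [[c0 h0] _ _ cpow _] := pchP p Pp.
  have hx : x *+ p ^ a.+1 = 0 by rewrite expnSr mulrnA ha mul0rn.
  rewrite (phiE _ _ _ Pp hx); apply: phiK_inj => //; first by case: Pp.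
    by rewrite expnSr mulrnA cpow h0.
  by rewrite cpow.
move=> p s z pp Dz hz; case: (pselect (z = 0)) => [->|nz]; first by left.
right.
have Pp : P'' p.
  split => //; have [t [wn wp]] := last_nonzero nz hz.
  by exists (z *+ p ^ t); split => //; apply: subMn.
split => //; have [[c0 h0] _ _ cpow abs] := pchP p Pp.
have [n [j ->]] := abs z s Dz hz.
have hc : pch p n *+ p ^ n.+1 = 0 by rewrite expnSr mulrnA cpow h0.
have [hx he] := phiK_surj (c := pch p) (K := n) j (prime_gt0 pp) hc.
move: hx he; set x := (qz_of _); move=> hx he.
exists x; split; first by exists n.+1.
by rewrite (phiE _ _ _ Pp hx).
Qed.


Lemma fwd_main : exists (P' : set nat) (k : nat -> nat),
     set_of_primes P' /\ (forall p, P' p -> (0 < k p)%N) /\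
     sub_isomorphic R (ext_dsum P' (fun p => cyclic_QZ (p ^ k p))) /\
     (sub_isomorphic D (fun _ : rat => True) \/
      exists P'' : set nat,
        set_of_primes P'' /\ (forall p, P' p -> ~ P'' p) /\
        sub_isomorphic D (ext_dsum P'' prufer_QZ)).
Proof.
have [k [kpos hR]] := R_iso.
exists P'set, k; split; first by move=> p [].
by split => //; split => //; apply: D_iso.
Qed.

End Fwd.

Lemma forward (A : zmodType) (D R : A -> Prop) :
  is_divisible_part D -> is_subgroup R -> internal_dsum D R ->
  nonzero_sub D -> End_centrally_essential A ->
   exists (P' : set nat) (k : nat -> nat),
     set_of_primes P' /\ (forall p, P' p -> (0 < k p)%N) /\
     sub_isomorphic R (ext_dsum P' (fun p => cyclic_QZ (p ^ k p))) /\
     (sub_isomorphic D (fun _ : rat => True) \/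
      exists P'' : set nat,
        set_of_primes P'' /\ (forall p, P' p -> ~ P'' p) /\
        sub_isomorphic D (ext_dsum P'' prufer_QZ)).
Proof.
move=> Dp sR ds nzD CE.
have [pi [epi piD piR piDd piRr]] := dsum_proj ds.
exact: (fwd_main Dp sR CE nzD epi piD piR piDd piRr).
Qed.

Section GenAdd.
Variables (A B : zmodType) (S : A -> Prop) (f : A -> B).
Hypothesis sS : is_subgroup S.
Hypothesis fD : forall x y, S x -> S y -> f (x + y) = f x + f y.

Lemma gadd0 : f 0 = 0.
Proof.
have h := fD (sub0 sS) (sub0 sS); rewrite addr0 in h.
by rewrite -[LHS](addrK (f 0)) -h subrr.
Qed.

Lemma gaddMn x n : S x -> f (x *+ n) = f x *+ n.
Proof.
move=> Sx; elim: n => [|n IH]; first by rewrite !mulr0n gadd0.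
by rewrite !mulrS fD ?IH //; apply: subMn.
Qed.

Lemma gaddN x : S x -> f (- x) = - f x.
Proof.
move=> Sx; have := fD Sx (subN sS Sx); rewrite subrr gadd0 => /eqP.
by rewrite eq_sym addrC addr_eq0 => /eqP.
Qed.

Lemma gaddMz x (c : int) : S x -> f (x *~ c) = f x *~ c.
Proof.
move=> Sx; case: c => n; first by rewrite -!pmulrn gaddMn.
rewrite NegzE !mulrNz -!pmulrn gaddN ?gaddMn //; exact: subMn.
Qed.

End GenAdd.

Lemma fun_mulzE (F : nat -> QZ) (c : int) q : (F *~ c) q = F q *~ c.
Proof.
case: c => n; first by rewrite -!pmulrn fun_mulnE.
by rewrite NegzE !mulrNz -!pmulrn -fun_mulnE.
Qed.

Lemma qz_tors (x : QZ) : exists e, (0 < e)%N /\ x *+ e = 0.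
Proof.
exists `|denq (qzval x)|%N; split; first by rewrite absz_gt0 denq_neq0.
apply: (qz_kill_int (t := numq (qzval x))).
by rewrite -[X in _ * X]/((`|denq (qzval x)|%N%:Z)%:~R) gtz0_abs ?denq_gt0 // numqE.
Qed.

Lemma fam_tors (F : nat -> QZ) : (exists N, forall q, (N <= q)%N -> F q = 0) ->
  exists m, (0 < m)%N /\ F *+ m = 0.
Proof.
move=> [N hN].
have h : forall M, exists m, (0 < m)%N /\ forall q, (q < M)%N -> F q *+ m = 0.
  elim => [|M [m [m0 hm]]]; first by exists 1%N.
  have [e [e0 he]] := qz_tors (F M).
  exists (m * e)%N; split; first by rewrite muln_gt0 m0.
  move=> q; rewrite ltnS leq_eqVlt => /orP [/eqP ->|hq].
    by rewrite mulnC mulrnA he mul0rn.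
  by rewrite mulrnA hm // mul0rn.
have [m [m0 hm]] := h N; exists m; split => //.
apply: funext => q; rewrite fun_mulnE fun_0E.
case: (ltnP q N) => hq; first exact: hm.
by rewrite hN // mul0rn.
Qed.

Lemma img_div (A : zmodType) (D : A -> Prop) f : is_divisible_part D -> is_endo f ->
  forall x, D x -> D (f x).
Proof.
move=> [[sD dD] maxD] ef x Dx.
pose T y := exists x, D x /\ f x = y.
have dT : divisible_sub T.
  split.
    split; first by exists 0; split; [exact: sub0 | exact: endo0].
    by move=> _ _ [a [Da <-]] [b [Db <-]]; exists (a - b); split; [exact: subB | exact: endoB].
  move=> _ n [a [Da <-]] n0; have [b [Db hb]] := dD a n Da n0.
  by exists (f b); split; [exists b | rewrite -endoMn // hb].
by apply: maxD dT _ _; exists x.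
Qed.

Lemma LC_comm (A : zmodType) (t : A) f g :
  (forall w, (forall n, t *+ n = 0 -> w *+ n = 0) -> exists c : int, w = t *~ c) ->
  is_endo f -> is_endo g -> f (g t) = g (f t).
Proof.
move=> lc ef eg.
have [cf hf] : exists c, f t = t *~ c by apply: lc => n hn; rewrite -endoMn // hn endo0.
have [cg hg] : exists c, g t = t *~ c by apply: lc => n hn; rewrite -endoMn // hn endo0.
by rewrite hg endoMz // hf endoMz // hg mulrzAC.
Qed.

Section Transfer.
Variables (A : zmodType) (S : A -> Prop) (psi : A -> nat -> QZ) (P : set nat) (H : nat -> QZ -> Prop).
Hypothesis sS : is_subgroup S.
Hypothesis psiD : forall x y, S x -> S y -> psi (x + y) = psi x + psi y.
Hypothesis psiE : forall x, S x -> ext_dsum P H (psi x).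
Hypothesis psiI : forall x y, S x -> S y -> psi x = psi y -> x = y.
Hypothesis PP : set_of_primes P.
Hypothesis Htor : forall q, P q -> forall x, H q x -> exists j, x *+ q ^ j = 0.

Lemma psi_tors x : S x -> exists m, (0 < m)%N /\ x *+ m = 0.
Proof.
move=> Sx; have [_ [_ hb]] := psiE Sx; have [m [m0 hm]] := fam_tors hb.
exists m; split => //; apply: psiI; [exact: subMn | exact: sub0 |].
by rewrite (gaddMn sS psiD) // hm (gadd0 sS psiD).
Qed.

Lemma comp_zero x p s : S x -> prime p -> x *+ p ^ s = 0 -> forall q, q <> p -> psi x q = 0.
Proof.
move=> Sx pp hx q qp; have [h1 [h2 _]] := psiE Sx.
case: (pselect (P q)) => Pq; last exact: h1.
have [j hj] := Htor Pq (h2 q Pq).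
have hp : psi x q *+ p ^ s = 0.
  by rewrite -fun_mulnE -(gaddMn sS psiD) // hx (gadd0 sS psiD) fun_0E.
apply: (coprime_kill hj hp).
rewrite coprimeXl // coprimeXr //.
rewrite prime_coprime ?PP // dvdn_prime2 //; last exact: PP.
by apply/eqP.
Qed.

Lemma vanish x p s : S x -> prime p -> x *+ p ^ s = 0 -> ~ P p -> x = 0.
Proof.
move=> Sx pp hx nP; apply: psiI => //; first exact: sub0.
rewrite (gadd0 sS psiD); apply: funext => q; rewrite fun_0E.
case: (eqVneq q p) => [->|qp]; first by have [h1 _] := psiE Sx; apply: h1.
by apply: (comp_zero Sx pp hx); apply/eqP.
Qed.

Lemma LC_S t r p s : S t -> S r -> prime p -> t *+ p ^ s = 0 ->
  (forall n, t *+ n = 0 -> r *+ n = 0) -> exists c : int, r = t *~ c.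
Proof.
move=> St Sr pp ht ann.
have hr := ann _ ht.
have zt := comp_zero St pp ht; have zr := comp_zero Sr pp hr.
have fullz (F : nat -> QZ) n : (forall q, q <> p -> F q = 0) -> F p *+ n = 0 -> F *+ n = 0.
  move=> hF hp; apply: funext => q; rewrite fun_mulnE fun_0E.
  by case: (eqVneq q p) => [->//|qp]; rewrite hF ?mul0rn //; apply/eqP.
have [c hc] : exists c : int, psi r p = psi t p *~ c.
  apply: qz_lc => n hn.
  have : psi t *+ n = 0 by apply: fullz.
  rewrite -(gaddMn sS psiD) // -(gadd0 sS psiD) => /psiI h.
  have := ann n (h (subMn _ sS St) (sub0 sS)).
  by move=> hrn; have := f_equal (fun F => F p) (f_equal psi hrn); rewrite (gaddMn sS psiD) // (gadd0 sS psiD) fun_mulnE fun_0E.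
exists c; apply: psiI => //; first exact: subMz.
rewrite (gaddMz sS psiD) //; apply: funext => q; rewrite fun_mulzE.
case: (eqVneq q p) => [->//|qp].
by rewrite zt ?zr ?mul0rz //; apply/eqP.
Qed.

End Transfer.

Lemma backward (A : zmodType) (D R : A -> Prop) :
  is_divisible_part D -> is_subgroup R -> internal_dsum D R -> nonzero_sub D ->
  (exists (P' : set nat) (k : nat -> nat),
     set_of_primes P' /\ (forall p, P' p -> (0 < k p)%N) /\
     sub_isomorphic R (ext_dsum P' (fun p => cyclic_QZ (p ^ k p))) /\
     (sub_isomorphic D (fun _ : rat => True) \/
      exists P'' : set nat,
        set_of_primes P'' /\ (forall p, P' p -> ~ P'' p) /\
        sub_isomorphic D (ext_dsum P'' prufer_QZ))) ->
  End_centrally_essential A.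
Proof.
move=> Dp sR ds [d0 [Dd0 nd0]] [P' [k [PP' [kpos [[psiR [psiRD [psiRE [psiRI psiRS]]]] hD]]]]].
have [pi [epi piD piR piDd piRr]] := dsum_proj ds.
have sD : is_subgroup D := Dp.1.1.
have HtorR : forall q, P' q -> forall x, cyclic_QZ (q ^ k q) x -> exists j, x *+ q ^ j = 0.
  by move=> q _ x hx; exists (k q).
have HtorD : forall q, (fun _ => True) q -> forall x, prufer_QZ q x -> exists j, x *+ q ^ j = 0.
  by [].
have comm : forall f g : A -> A, is_endo f -> is_endo g -> forall z, f (g z) = g (f z).
  move=> f g ef eg.
  pose C z := f (g z) = g (f z).
  have Cadd a b : C a -> C b -> C (a + b).
    by rewrite /C => ha hb; rewrite (eg a b) (ef (g a)) (ef a b) (eg (f a)) ha hb.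
  have C0 : C 0 by rewrite /C !endo0.
  have CR : forall r, R r -> C r.
    move=> r Rr; have [m [m0 hm]] := psi_tors sR psiRD psiRE psiRI Rr.
    apply: (prim_ind (S := R) (Q := C) sR C0 (fun a b _ _ => Cadd a b) _ m0 Rr hm).
    move=> p s t pp Rt ht; rewrite /C; apply: (@LC_comm A t f g); [move=> w ann | exact: ef | exact: eg].
    have hw : w *+ p ^ s = 0 := ann _ ht.
    have hpw : pi w *+ p ^ s = 0 by rewrite -endoMn // hw endo0.
    have dz : pi w = 0.
      case: hD => [[psiD [psiDD [_ [psiDI _]]]] | [P'' [PP'' [disj [psiD [psiDD [psiDE [psiDI _]]]]]]]].
        apply: psiDI => //; first exact: sub0.
        have := f_equal psiD hpw; rewrite (gaddMn sD psiDD) // (gadd0 sD psiDD) => /eqP.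
        rewrite mulrn_eq0 => /orP [/eqP e|/eqP -> //].
        by move: (expn_gt0 p s); rewrite e (prime_gt0 pp).
      case: (pselect (t = 0)) => [t0|tn].
        have := ann 1%N; rewrite t0 mul0rn mulr1n => /(_ erefl) ->.
        exact: endo0.
      have Pp : P' p.
        case: (pselect (P' p)) => // nP; exfalso; apply: tn.
        exact: (vanish sR psiRD psiRE psiRI PP' HtorR Rt pp ht nP).
      exact: (vanish sD psiDD psiDE psiDI PP'' (fun q _ x hx => hx) (piD w) pp hpw (disj p Pp)).
    have Rw : R w by rewrite -[w]subr0 -dz; apply: piR.
    exact: (LC_S sR psiRD psiRE psiRI PP' HtorR Rt Rw pp ht ann).
  have CD : forall d, D d -> C d.
    case: hD => [[psiD [psiDD [_ [psiDI psiDS]]]] | [P'' [PP'' [disj [psiD [psiDD [psiDE [psiDI _]]]]]]]].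
      have [e1 [De1 he1]] := psiDS 1 I.
      have tf : forall d m, D d -> (0 < m)%N -> d *+ m = 0 -> d = 0.
        move=> d m Dd m0 hd; apply: psiDI => //; first exact: sub0.
        have := f_equal psiD hd; rewrite (gaddMn sD psiDD) // (gadd0 sD psiDD) => /eqP.
        rewrite mulrn_eq0 => /orP [/eqP e|/eqP -> //].
        by move: m0; rewrite e.
      have rk : forall d, D d -> exists m (j : int), (0 < m)%N /\ d *+ m = e1 *~ j.
        move=> d Dd; set q := psiD d.
        exists `|denq q|%N, (numq q); split; first by rewrite absz_gt0 denq_neq0.
        apply: psiDI; [exact: subMn | exact: subMz |].
        rewrite (gaddMn sD psiDD) // (gaddMz sD psiDD) // he1 -/q.
        rewrite -mulr_natr -[X in _ * X]/((`|denq q|%N%:Z)%:~R) gtz0_abs ?denq_gt0 //.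
        by rewrite -numqE.
      have fD := img_div Dp ef; have gD := img_div Dp eg.
      have Ce1 : C e1.
        have [m1 [n1 [m10 h1]]] := rk _ (gD _ De1).
        have [m2 [n2 [m20 h2]]] := rk _ (fD _ De1).
        have DC : D (f (g e1) - g (f e1)) by apply: subB => //; [apply: fD; apply: gD | apply: gD; apply: fD].
        apply/eqP; rewrite -subr_eq0; apply/eqP; apply: (tf _ (m1 * m2)%N DC); first by rewrite muln_gt0 m10.
        have X1 : f (g e1) *+ (m1 * m2) = e1 *~ n2 *~ n1.
          by rewrite mulrnA -(endoMn _ _ ef) h1 (endoMz _ _ ef) pmulrn mulrzAC -pmulrn h2.
        have X2 : g (f e1) *+ (m1 * m2) = e1 *~ n1 *~ n2.
          by rewrite mulnC mulrnA -(endoMn _ _ eg) h2 (endoMz _ _ eg) pmulrn mulrzAC -pmulrn h1.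
        by rewrite mulrnBl X1 X2 mulrzAC subrr.
      move=> d Dd; have [m [j [m0 hd]]] := rk d Dd.
      have DC : D (f (g d) - g (f d)) by apply: subB => //; [apply: fD; apply: gD | apply: gD; apply: fD].
      apply/eqP; rewrite -subr_eq0; apply/eqP; apply: (tf _ m DC m0).
      rewrite mulrnBl -(endoMn _ _ ef) -(endoMn _ _ eg) -(endoMn _ _ eg) -(endoMn _ _ ef) hd.
      by rewrite !(endoMz _ _ eg) !(endoMz _ _ ef) !(endoMz _ _ eg) Ce1 subrr.
    move=> d Dd; have [m [m0 hm]] := psi_tors sD psiDD psiDE psiDI Dd.
    apply: (prim_ind (S := D) (Q := C) sD C0 (fun a b _ _ => Cadd a b) _ m0 Dd hm).
    move=> p s t pp Dt ht; rewrite /C; apply: (@LC_comm A t f g); [move=> w ann | exact: ef | exact: eg].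
    have hw : w *+ p ^ s = 0 := ann _ ht.
    have hrw : (w - pi w) *+ p ^ s = 0 by rewrite mulrnBl -(endoMn _ _ epi) hw (endo0 epi) subrr.
    have rz : w - pi w = 0.
      case: (pselect (t = 0)) => [t0|tn].
        have := ann 1%N; rewrite t0 mul0rn mulr1n => /(_ erefl) ->.
        by rewrite endo0 // subrr.
      have Pp : P'' p.
        case: (pselect (P'' p)) => // nP; exfalso; apply: tn.
        exact: (vanish sD psiDD psiDE psiDI PP'' (fun q _ x hx => hx) Dt pp ht nP).
      apply: (vanish sR psiRD psiRE psiRI PP' HtorR (piR w) pp hrw).
      by move=> P'p; apply: (disj p P'p).
    have Dw : D w by move/eqP: rz; rewrite subr_eq0 => /eqP ->.
    exact: (LC_S sD psiDD psiDE psiDI PP'' (fun q _ x hx => hx) Dt Dw pp ht ann).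
  move=> z; rewrite -(subrKC (pi z) z); apply: Cadd; [apply: CD | apply: CR] => //.
move=> a ea [z az]; exists id, a; split.
  by split => //; move=> g eg x.
split; first by split => // g eg x; exact: (comm a g ea eg x).
split; first by exists d0.
by split; first exists z.
Qed.

Unset Implicit Arguments.

Theorem theorem2p4 (A : zmodType) (D R : A -> Prop) :
  is_divisible_part D -> is_subgroup R -> internal_dsum D R ->
  nonzero_sub D -> nonzero_sub R ->
  (End_centrally_essential A <->
   exists (P' : set nat) (k : nat -> nat),
     set_of_primes P' /\ (forall p, P' p -> (0 < k p)%N) /\
     sub_isomorphic R (ext_dsum P' (fun p => cyclic_QZ (p ^ k p))) /\
     (sub_isomorphic D (fun _ : rat => True) \/
      exists P'' : set nat,
        set_of_primes P'' /\ (forall p, P' p -> ~ P'' p) /\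
        sub_isomorphic D (ext_dsum P'' prufer_QZ))).
Proof.
move=> Dp sR ds nzD nzR; split.
  exact: (forward Dp sR ds nzD).
exact: (backward Dp sR ds nzD).
Qed.
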